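(* Let $S_\psi\subset\mathbb{R}^3$ be the surface of revolution parametrized by $(r,\theta)\mapsto(\psi(r)\cos\theta,\psi(r)\sin\theta,\chi(r))$, $(r,\theta)\in[r_1,r_2]\times[0,2\pi)$, and let $\Omega=\{(\psi(r)\cos\theta,\psi(r)\sin\theta,\chi(r)) : r\in[0,a],\ \theta\in(0,2\pi]\}$ with $r_1\le0<a\le r_2$. Let $f\in C^1(\mathbb{R})$, $\alpha\in\mathbb{R}$, and let $v=v(r)$ be a radial stationary solution of $$\Delta v+f(v)=0\text{ in }\Omega,\qquad\frac{\partial v}{\partial\nu}+\alpha v=0\text{ on }\partial\Omega.$$ If $$-\Big(\frac{\psi'}{\psi}\Big)'=-\frac{\psi''}{\psi}+\Big(\frac{\psi'}{\psi}\Big)^2\geq0\quad\text{in }(0,a)$$ and $$L_a\big[H_a\alpha^2v(a)^2+\alpha v(a)f(v(a))+\alpha^3v(a)^2\big]+L_0\big[H_0\alpha^2v(0)^2+\alpha v(0)f(v(0))+\alpha^3v(0)^2\big]<0,$$ where $L_0=2\pi\psi(0)$, $L_a=2\pi\psi(a)$, $H_a=-\frac{\psi'(a)}{\psi(a)}$, $H_0=\frac{\psi'(0)}{\psi(0)}$, then $v$ is unstable.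
   Context: Here $r\mapsto(\psi(r),\chi(r))$ is a simple regular plane curve, $\psi\in C^2$, $\psi>0$ on $[r_1,r_2]$, $(\psi')^2+(\chi')^2=1$, and $\chi'(0)>0$, $\chi'(a)>0$. $S_\psi$ carries the metric $dr^2+\psi(r)^2d\theta^2$, with Laplace–Beltrami operator $\Delta u=u_{rr}+\frac{\psi'}{\psi}u_r+\frac1{\psi^2}u_{\theta\theta}$; $\partial\Omega$ consists of the circles $r=0$ and $r=a$ with outer unit normal $\nu=-\partial_r$ on $r=0$ and $\nu=\partial_r$ on $r=a$. A solution is unstable if the smallest eigenvalue $\lambda_1$ of $\Delta\phi+f'(v)\phi+\lambda\phi=0$ in $\Omega$, $\partial_\nu\phi+\alpha\phi=0$ on $\partial\Omega$ is negative. *)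

(* Defs.v *)
From Stdlib Require Import Reals Lra.
From Coquelicot Require Import Coquelicot.
Open Scope R_scope.

(* Functions on the parameter strip are u : R -> R -> R, u r theta,
   with coordinates (r, theta); periodicity 2*PI in theta encodes the
   angular variable of the surface of revolution. *)

Definition d_r (u : R -> R -> R) (r th : R) : R := Derive (fun s => u s th) r.
Definition d_th (u : R -> R -> R) (r th : R) : R := Derive (fun t => u r t) th.

Definition C2_strip (a : R) (u : R -> R -> R) : Prop :=
  (forall r th,
     ex_derive (fun s => u s th) r /\ ex_derive (fun t => u r t) th /\
     ex_derive (fun s => d_r u s th) r /\ ex_derive (fun t => d_r u r t) th /\
     ex_derive (fun s => d_th u s th) r /\ ex_derive (fun t => d_th u r t) th) /\
  (forall r th, 0 <= r <= a ->
     continuous (fun p : R * R => u (fst p) (snd p)) (r, th) /\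
     continuous (fun p : R * R => d_r u (fst p) (snd p)) (r, th) /\
     continuous (fun p : R * R => d_th u (fst p) (snd p)) (r, th) /\
     continuous (fun p : R * R => d_r (d_r u) (fst p) (snd p)) (r, th) /\
     continuous (fun p : R * R => d_th (d_r u) (fst p) (snd p)) (r, th) /\
     continuous (fun p : R * R => d_r (d_th u) (fst p) (snd p)) (r, th) /\
     continuous (fun p : R * R => d_th (d_th u) (fst p) (snd p)) (r, th)).

(* Laplace-Beltrami operator of the metric dr^2 + psi(r)^2 dtheta^2 *)
Definition LB (psi : R -> R) (u : R -> R -> R) (r th : R) : R :=
  d_r (d_r u) r th + Derive psi r / psi r * d_r u r th
  + / (psi r ^ 2) * d_th (d_th u) r th.

(* lam is an eigenvalue of  Delta phi + q(r) phi + lam phi = 0 in Omega,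
   d_nu phi + alpha phi = 0 on dOmega (nu = -d_r at r=0, nu = d_r at r=a),
   with a classical (C^2 up to the boundary), nonzero eigenfunction. *)
Definition is_eigenvalue (psi : R -> R) (a alpha : R) (q : R -> R) (lam : R) : Prop :=
  exists phi : R -> R -> R,
    C2_strip a phi /\
    (forall r th, phi r (th + 2 * PI) = phi r th) /\
    (exists r th, 0 <= r <= a /\ phi r th <> 0) /\
    (forall r th, 0 < r < a ->
       LB psi phi r th + q r * phi r th + lam * phi r th = 0) /\
    (forall th, - d_r phi 0 th + alpha * phi 0 th = 0) /\
    (forall th, d_r phi a th + alpha * phi a th = 0).

Definition lambda1 (psi : R -> R) (a alpha : R) (q : R -> R) : Rbar :=
  Glb_Rbar (is_eigenvalue psi a alpha q).

(* v is unstable: the smallest eigenvalue of the linearized problem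
   Delta phi + f'(v) phi + lam phi = 0 with the Robin condition is negative *)
Definition unstable (psi : R -> R) (a alpha : R) (f v : R -> R) : Prop :=
  Rbar_lt (lambda1 psi a alpha (fun r => Derive f (v r))) (Finite 0).

(* Main.v *)
Require Import Defs.
From Stdlib Require Import Reals Lra Lia Classical FunctionalExtensionality IndefiniteDescription.
From Coquelicot Require Import Coquelicot.
Open Scope R_scope.
Notation fact := Factorial.fact.


Lemma cont_abs (f : R -> R) x : continuous f x -> continuous (fun s => Rabs (f s)) x.
Proof. intros H. apply (continuous_comp f Rabs). exact H. apply continuous_Rabs. Qed.

Lemma exdc (f : R -> R) x : ex_derive f x -> continuous f x.
Proof. intros H. apply (ex_derive_continuous (K:=R_AbsRing) (V:=R_NormedModule) f x H). Qed.

Lemma RIu (f : R -> R) a b l : is_RInt f a b l -> RInt f a b = l.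
Proof. intros H. apply (is_RInt_unique (V:=R_CompleteNormedModule)). exact H. Qed.

Lemma exRc (f : R -> R) a b : (forall z, Rmin a b <= z <= Rmax a b -> continuous f z) -> ex_RInt f a b.
Proof. intros H. apply (ex_RInt_continuous (V:=R_CompleteNormedModule)). exact H. Qed.

Lemma RInt_pow_bound (f : R -> R) (r B : R) (k : nat) :
  (forall s, continuous f s) ->
  (forall s, Rmin 0 r <= s <= Rmax 0 r -> Rabs (f s) <= B * Rabs s ^ k) ->
  Rabs (RInt f 0 r) <= B * Rabs r ^ (S k) / INR (S k).
Proof.
  intros Hc Hb.
  assert (HSk : 0 < INR (S k)) by (apply lt_0_INR; lia).
  destruct (Rle_or_lt 0 r) as [Hr|Hr].
  - rewrite Rmin_left in Hb by lra. rewrite Rmax_right in Hb by lra.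
    eapply Rle_trans. apply abs_RInt_le. lra. apply exRc; intros; auto.
    assert (HI : is_RInt (fun s => B * s ^ k) 0 r (minus (B * r ^ (S k) / INR (S k)) (B * 0 ^ (S k) / INR (S k)))).
    { apply (is_RInt_derive (fun s => B * s ^ (S k) / INR (S k))).
      - intros x _. auto_derive; [easy|]. change (match k with 0%nat => 1 | S _ => INR k + 1 end) with (INR (S k)). field. lra.
      - intros x _. apply exdc. auto_derive. easy. }
    apply RIu in HI. rewrite (Rabs_pos_eq r Hr).
    replace (B * r ^ S k / INR (S k)) with (RInt (fun s => B * s ^ k) 0 r).
    2:{ rewrite HI. unfold minus, plus, opp; cbn -[INR]. field. lra. }
    apply RInt_le. lra. apply exRc; intros; apply cont_abs; auto.
    apply exRc; intros. apply exdc. auto_derive. easy.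
    intros x Hx. rewrite <- (Rabs_pos_eq x) at 2 by lra. apply Hb. lra.
  - rewrite Rmin_right in Hb by lra. rewrite Rmax_left in Hb by lra.
    rewrite <- opp_RInt_swap by (apply exRc; intros; auto).
    change (opp (RInt f r 0)) with (- RInt f r 0). rewrite Rabs_Ropp.
    eapply Rle_trans. apply abs_RInt_le. lra. apply exRc; intros; auto.
    assert (HI : is_RInt (fun s => B * (- s) ^ k) r 0 (minus (- (B * (- 0) ^ (S k) / INR (S k))) (- (B * (- r) ^ (S k) / INR (S k))))).
    { apply (is_RInt_derive (fun s => - (B * (- s) ^ (S k) / INR (S k)))).
      - intros x _. auto_derive; [easy|]. change (match k with 0%nat => 1 | S _ => INR k + 1 end) with (INR (S k)). field. lra.
      - intros x _. apply exdc. auto_derive. easy. }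
    apply RIu in HI.
    replace (B * Rabs r ^ S k / INR (S k)) with (RInt (fun s => B * (- s) ^ k) r 0).
    2:{ rewrite HI. rewrite (Rabs_left r Hr). unfold minus, plus, opp; cbn -[INR]. field. lra. }
    apply RInt_le. lra. apply exRc; intros; apply cont_abs; auto.
    apply exRc; intros. apply exdc. auto_derive. easy.
    intros x Hx. rewrite <- (Rabs_left x) by lra. apply Hb. lra.
Qed.

Lemma cont_pt (f : R -> R) x : continuous f x -> continuity_pt f x.
Proof. intros H. apply continuity_pt_filterlim. exact H. Qed.

Lemma pt_cont (f : R -> R) x : continuity_pt f x -> continuous f x.
Proof. intros H. apply continuity_pt_filterlim. exact H. Qed.

Lemma diff_le_open (f df : R -> R) a b K : a <= b ->
  (forall x, a < x < b -> is_derive f x (df x)) ->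
  (forall x, a < x < b -> df x <= K) ->
  (forall x, a <= x <= b -> continuous f x) -> f b - f a <= K * (b - a).
Proof.
  intros Hab Hd Hk Hc. destruct (Req_dec a b) as [->|Hne]. lra.
  assert (pr1 : forall c, a < c < b -> derivable_pt f c).
  { intros c Hc'. apply ex_derive_Reals_0. eexists. apply Hd; auto. }
  assert (pr2 : forall c, a < c < b -> derivable_pt id c).
  { intros c _. apply derivable_pt_id. }
  destruct (MVT f id a b pr1 pr2) as [c [P HP]]. lra.
  intros; apply cont_pt; auto. intros; apply derivable_continuous_pt, derivable_pt_id.
  replace (derive_pt id c (pr2 c P)) with 1 in HP.
  2:{ symmetry. apply derive_pt_eq_0. apply derivable_pt_lim_id. }
  unfold id in HP.
  replace (derive_pt f c (pr1 c P)) with (df c) in HP.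
  2:{ symmetry. apply derive_pt_eq_0. apply is_derive_Reals. apply Hd; auto. }
  assert (df c <= K) by (apply Hk; auto). nra.
Qed.

Lemma diff_ge_open (f df : R -> R) a b K : a <= b ->
  (forall x, a < x < b -> is_derive f x (df x)) ->
  (forall x, a < x < b -> K <= df x) ->
  (forall x, a <= x <= b -> continuous f x) -> K * (b - a) <= f b - f a.
Proof.
  intros Hab Hd Hk Hc.
  assert (H := diff_le_open (fun x => - f x) (fun x => - df x) a b (- K) Hab).
  assert (- f b - - f a <= - K * (b - a)); [|lra].
  apply H. intros x Hx. apply (is_derive_opp f). auto.
  intros x Hx. specialize (Hk x Hx). lra.
  intros x Hx. apply (continuous_opp f). auto.
Qed.

Lemma deriv_left_min (f : R -> R) x l d : 0 < d -> is_derive f x l ->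
  (forall h, - d < h < 0 -> f x <= f (x + h)) -> l <= 0.
Proof.
  intros Hd Hf Hm. apply is_derive_Reals in Hf.
  destruct (Rle_or_lt l 0) as [|Hl]; auto. exfalso.
  destruct (Hf l Hl) as [del Hdel].
  set (h := - Rmin d del / 2).
  assert (Hh1 : - d < h < 0). { unfold h. assert (Rmin d del <= d) by apply Rmin_l. assert (0 < Rmin d del) by (apply Rmin_glb_lt; [lra| apply cond_pos]). lra. }
  assert (Hh2 : Rabs h < del). { unfold h. assert (Rmin d del <= del) by apply Rmin_r. assert (0 < Rmin d del) by (apply Rmin_glb_lt; [lra| apply cond_pos]). rewrite Rabs_left; lra. }
  specialize (Hdel h ltac:(lra) Hh2). specialize (Hm h Hh1).
  assert ((f (x + h) - f x) / h <= 0).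
  { unfold Rdiv. assert (/ h < 0) by (apply Rinv_lt_0_compat; lra). nra. }
  rewrite Rabs_left1 in Hdel by lra. lra.
Qed.

Lemma deriv_right_min (f : R -> R) x l d : 0 < d -> is_derive f x l ->
  (forall h, 0 < h < d -> f x <= f (x + h)) -> 0 <= l.
Proof.
  intros Hd Hf Hm. apply is_derive_Reals in Hf.
  destruct (Rle_or_lt 0 l) as [|Hl]; auto. exfalso.
  assert (Hl' : 0 < - l) by lra.
  destruct (Hf (- l) Hl') as [del Hdel].
  set (h := Rmin d del / 2).
  assert (0 < Rmin d del) by (apply Rmin_glb_lt; [lra| apply cond_pos]).
  assert (Hh1 : 0 < h < d). { unfold h. assert (Rmin d del <= d) by apply Rmin_l. lra. }
  assert (Hh2 : Rabs h < del). { unfold h. assert (Rmin d del <= del) by apply Rmin_r. rewrite Rabs_pos_eq; lra. }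
  specialize (Hdel h ltac:(lra) Hh2). specialize (Hm h Hh1).
  assert (0 <= (f (x + h) - f x) / h).
  { unfold Rdiv. assert (0 < / h) by (apply Rinv_0_lt_compat; lra). nra. }
  rewrite Rabs_pos_eq in Hdel by lra. lra.
Qed.

Lemma cont_eps (h : R -> R) r eps : continuous h r -> 0 < eps ->
  exists d, 0 < d /\ forall x, Rabs (x - r) < d -> Rabs (h x - h r) < eps.
Proof.
  intros Hc He. apply cont_pt in Hc.
  destruct (Hc eps He) as [d [Hd Hx]]. exists d. split; auto.
  intros x Hxr. destruct (Req_dec x r) as [->|Hne].
  rewrite Rminus_eq_0, Rabs_R0; auto.
  apply (Hx x). split. split. exact I. auto. exact Hxr.
Qed.

Lemma first_zero (h : R -> R) x0 : 0 <= x0 ->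
  (forall x, 0 <= x <= x0 -> continuous h x) -> 0 < h 0 -> h x0 <= 0 ->
  exists r, 0 < r <= x0 /\ h r = 0 /\ forall x, 0 <= x < r -> 0 < h x.
Proof.
  intros Hx0 Hc H0 Hx0n.
  set (E := fun x => 0 <= x <= x0 /\ forall t, 0 <= t <= x -> 0 < h t).
  assert (Hb : bound E). { exists x0. intros x [Hx _]. lra. }
  assert (He : exists x, E x). { exists 0. split. lra. intros t Ht. replace t with 0 by lra. auto. }
  destruct (completeness E Hb He) as [r [Hub Hlub]].
  assert (Hr0 : 0 <= r). { apply Hub. split. lra. intros t Ht. replace t with 0 by lra. auto. }
  assert (Hrx0 : r <= x0). { apply Hlub. intros x [Hx _]. lra. }
  assert (Hpos : forall x, 0 <= x < r -> 0 < h x).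
  { intros x Hx. destruct (Rle_or_lt r x) as [|Hlt]. lra.
    assert (~ (forall e, E e -> e <= x)).
    { intros Hcon. specialize (Hlub x Hcon). lra. }
    apply not_all_ex_not in H. destruct H as [e He'].
    apply imply_to_and in He'. destruct He' as [[He1 He2] He3].
    apply He2. lra. }
  assert (Hhr : h r = 0).
  { destruct (Rtotal_order (h r) 0) as [Hneg|[Hz|Hp]]; auto.
    - exfalso. destruct (cont_eps h r (- h r) (Hc r ltac:(lra)) ltac:(lra)) as [d [Hd Hdx]].
      destruct (Req_dec r 0) as [Hr|Hr]. subst r. lra.
      set (x := Rmax 0 (r - d / 2)).
      assert (Hx : 0 <= x < r). { unfold x. split. apply Rmax_l. apply Rmax_lub_lt; lra. }
      assert (Rabs (x - r) < d). { unfold x. rewrite Rabs_left by (apply Rlt_minus; apply Hx).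
        assert (r - d / 2 <= Rmax 0 (r - d / 2)) by apply Rmax_r. lra. }
      specialize (Hdx x H). specialize (Hpos x Hx).
      rewrite Rabs_lt_between in Hdx. lra.
    - exfalso. destruct (cont_eps h r (h r) (Hc r ltac:(lra)) ltac:(lra)) as [d [Hd Hdx]].
      destruct (Req_dec r x0) as [Hr|Hr]. subst r. lra.
      set (r' := Rmin x0 (r + d / 2)).
      assert (Hr' : r < r'). { unfold r'. apply Rmin_glb_lt; lra. }
      assert (E r').
      { split. split. lra. apply Rmin_l.
        intros t Ht. destruct (Rlt_or_le t r). apply Hpos; lra.
        assert (Rabs (t - r) < d). { rewrite Rabs_pos_eq by lra.
          assert (Rmin x0 (r + d / 2) <= r + d / 2) by apply Rmin_r. unfold r' in Ht. lra. }
        specialize (Hdx t H1). rewrite Rabs_lt_between in Hdx. lra. }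
      specialize (Hub r' H). lra. }
  exists r. split; [|split; auto].
  split; auto. destruct (Req_dec r 0) as [->|]; [lra|lra].
Qed.

Lemma cmul (f g : R -> R) x : continuous f x -> continuous g x -> continuous (fun s => f s * g s) x.
Proof. intros; apply pt_cont, continuity_pt_mult; apply cont_pt; auto. Qed.
Lemma cadd (f g : R -> R) x : continuous f x -> continuous g x -> continuous (fun s => f s + g s) x.
Proof. intros; apply pt_cont, continuity_pt_plus; apply cont_pt; auto. Qed.
Lemma csub (f g : R -> R) x : continuous f x -> continuous g x -> continuous (fun s => f s - g s) x.
Proof. intros; apply pt_cont, continuity_pt_minus; apply cont_pt; auto. Qed.
Lemma copp (f : R -> R) x : continuous f x -> continuous (fun s => - f s) x.
Proof. intros; apply pt_cont, continuity_pt_opp; apply cont_pt; auto. Qed.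
Lemma cconst (c x : R) : continuous (fun _ : R => c) x.
Proof. apply pt_cont, continuity_pt_const. intros a b; auto. Qed.
Lemma ccomp (f g : R -> R) x : continuous f x -> continuous g (f x) -> continuous (fun s => g (f s)) x.
Proof. intros; apply (continuous_comp f g); auto. Qed.

Lemma eps_cont (f : R -> R) x :
  (forall eps, 0 < eps -> exists d, 0 < d /\ forall s, Rabs (s - x) < d -> Rabs (f s - f x) < eps) ->
  continuous f x.
Proof.
  intros H. apply pt_cont. intros eps He. destruct (H eps He) as [d [Hd Hs]].
  exists d. split; auto. intros s [_ Hsx]. apply Hs. exact Hsx.
Qed.

Lemma int_deriv (g : R -> R) r : (forall x, continuous g x) ->
  is_derive (fun b => RInt g 0 b) r (g r).
Proof.
  intros Hg. apply (is_derive_RInt g (fun b => RInt g 0 b) 0 r).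
  apply filter_forall. intros b. apply (RInt_correct (V:=R_CompleteNormedModule)).
  apply exRc. intros; auto. auto.
Qed.

Lemma int_cont (g : R -> R) c r : (forall x, continuous g x) ->
  continuous (fun b => c + RInt g 0 b) r.
Proof.
  intros Hg. apply exdc. eexists. apply (is_derive_plus (fun _ => c) (fun b => RInt g 0 b)).
  apply is_derive_const. apply int_deriv. auto.
Qed.

Lemma abs_le_eps (x : R) : (forall eps, 0 < eps -> Rabs x < eps) -> x = 0.
Proof.
  intros H. destruct (Req_dec x 0); auto. exfalso.
  assert (0 < Rabs x) by (apply Rabs_pos_lt; auto). specialize (H (Rabs x) H1). lra.
Qed.

Lemma tele (f : nat -> R) n : sum_f_R0 (fun k => f (S k) - f k) n = f (S n) - f O.
Proof. induction n; simpl. ring. rewrite IHn. ring. Qed.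

Lemma tail_small (b : nat -> R) : ex_series b -> forall eps, 0 < eps ->
  exists N, forall n, (N <= n)%nat -> Rabs (Series (fun k => b (n + k)%nat)) < eps.
Proof.
  intros Hb eps He. pose proof (Series_correct _ Hb) as Hs.
  apply is_series_Reals in Hs. destruct (Hs eps He) as [N HN].
  exists (S N). intros n Hn.
  rewrite <- (Rplus_0_l (Series _)).
  replace 0 with (Series b - sum_f_R0 b (pred n) - Series (fun k => b (n + k)%nat)) at 1.
  2:{ rewrite (Series_incr_n b n) by (auto; lia). ring. }
  replace (Series b - sum_f_R0 b (pred n) - Series (fun k => b (n + k)%nat) + Series (fun k => b (n + k)%nat)) with (- (sum_f_R0 b (pred n) - Series b)) by ring.
  rewrite Rabs_Ropp. apply (HN (pred n)). lia.
Qed.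


Fixpoint pic (P Q : R -> R) (y0 u0 : R) (n : nat) : (R -> R) * (R -> R) :=
  match n with
  | O => (fun _ => y0, fun _ => u0)
  | S m => (fun r => y0 + RInt (snd (pic P Q y0 u0 m)) 0 r,
            fun r => u0 + RInt (fun s => - P s * snd (pic P Q y0 u0 m) s - Q s * fst (pic P Q y0 u0 m) s) 0 r)
  end.

Lemma pic_cont P Q y0 u0 (HP : forall x, continuous P x) (HQ : forall x, continuous Q x) n :
  (forall x, continuous (fst (pic P Q y0 u0 n)) x) /\ (forall x, continuous (snd (pic P Q y0 u0 n)) x).
Proof.
  induction n as [|n [IH1 IH2]]; simpl; split; intros x.
  apply cconst. apply cconst.
  apply int_cont. auto.
  apply int_cont. intros z. apply csub; apply cmul; auto. apply copp; auto.
Qed.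

Lemma RInt_minus_R (f g : R -> R) a b : (forall x, continuous f x) -> (forall x, continuous g x) ->
  RInt f a b - RInt g a b = RInt (fun s => f s - g s) a b.
Proof.
  intros Hf Hg. symmetry. apply (RInt_minus (V:=R_CompleteNormedModule)); apply exRc; intros; auto.
Qed.

Lemma addK (a b : R) : a + b - a = b. Proof. ring. Qed.
Lemma addK2 (a b c : R) : a + b - (a + c) = b - c. Proof. ring. Qed.

Definition bnd (A c : R) (n : nat) (r : R) := A * c ^ n * Rabs r ^ (S n) / INR (fact (S n)).

Lemma INR_fact_pos n : 0 < INR (fact n).
Proof. apply INR_fact_lt_0. Qed.

Lemma bnd_nonneg A c n r : 0 <= A -> 0 <= c -> 0 <= bnd A c n r.
Proof.
  intros HA Hc. unfold bnd. pose proof (INR_fact_pos (S n)).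
  apply Rmult_le_pos. apply Rmult_le_pos. apply Rmult_le_pos; auto. apply pow_le; auto.
  apply pow_le, Rabs_pos. left; apply Rinv_0_lt_compat; auto.
Qed.

Lemma pic_diff P Q y0 u0 K (HP : forall x, continuous P x) (HQ : forall x, continuous Q x)
  (HK : 0 <= K) (HPb : forall x, Rabs (P x) <= K) (HQb : forall x, Rabs (Q x) <= K) n r :
  Rabs (fst (pic P Q y0 u0 (S n)) r - fst (pic P Q y0 u0 n) r)
    <= bnd (Rabs u0 + K * Rabs u0 + K * Rabs y0) (1 + 2 * K) n r /\
  Rabs (snd (pic P Q y0 u0 (S n)) r - snd (pic P Q y0 u0 n) r)
    <= bnd (Rabs u0 + K * Rabs u0 + K * Rabs y0) (1 + 2 * K) n r.
Proof.
  set (A := Rabs u0 + K * Rabs u0 + K * Rabs y0). set (c := 1 + 2 * K).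
  assert (HA : 0 <= A). { unfold A. pose proof (Rabs_pos u0). pose proof (Rabs_pos y0). nra. }
  assert (Hc : 1 <= c) by (unfold c; lra).
  pose proof (pic_cont P Q y0 u0 HP HQ) as Hcont.
  revert r. induction n as [|n IH]; intros r.
  - unfold bnd. simpl pic. cbn [fst snd]. split.
    + rewrite addK.
      replace (A * c ^ 0 * Rabs r ^ 1 / INR (fact 1)) with (A * Rabs r ^ 1 / INR 1) by (simpl; field).
      apply RInt_pow_bound. intros; apply cconst. intros s _. simpl.
      unfold A. pose proof (Rabs_pos u0). pose proof (Rabs_pos y0). nra.
    + rewrite addK.
      replace (A * c ^ 0 * Rabs r ^ 1 / INR (fact 1)) with (A * Rabs r ^ 1 / INR 1) by (simpl; field).
      apply RInt_pow_bound. intros; apply csub; apply cmul; try apply cconst; auto. apply copp; auto.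
      intros s _. simpl. rewrite Rmult_1_r.
      unfold Rminus. eapply Rle_trans. apply Rabs_triang. repeat rewrite ?Rabs_Ropp, ?Rabs_mult.
      pose proof (HPb s). pose proof (HQb s). pose proof (Rabs_pos u0). pose proof (Rabs_pos y0).
      unfold A. nra.
  - destruct (Hcont n) as [Hy Hu]. destruct (Hcont (S n)) as [Hy' Hu'].
    assert (Hb : forall s, c * bnd A c n s <= A * c ^ (S n) / INR (fact (S n)) * Rabs s ^ (S n)).
    { intros s. unfold bnd. pose proof (INR_fact_pos (S n)).
      assert (0 <= A * c ^ n * Rabs s ^ S n) by (apply Rmult_le_pos; [apply Rmult_le_pos; auto; apply pow_le; lra | apply pow_le, Rabs_pos]).
      simpl (c ^ S n). unfold Rdiv.
      assert (0 <= A * c ^ n * Rabs s ^ S n * / INR (fact (S n))) by (apply Rmult_le_pos; auto; left; apply Rinv_0_lt_compat; auto).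
      nra. }
    assert (Heq : A * c ^ (S n) / INR (fact (S n)) * Rabs r ^ (S (S n)) / INR (S (S n)) = bnd A c (S n) r).
    { unfold bnd. rewrite (fact_simpl (S n)), mult_INR. field. split. pose proof (INR_fact_pos (S n)); lra. apply not_0_INR; lia. }
    split.
    + change (fst (pic P Q y0 u0 (S (S n))) r) with (y0 + RInt (snd (pic P Q y0 u0 (S n))) 0 r).
      change (fst (pic P Q y0 u0 (S n)) r) with (y0 + RInt (snd (pic P Q y0 u0 n)) 0 r).
      rewrite addK2.
      rewrite RInt_minus_R by auto. rewrite <- Heq.
      apply RInt_pow_bound. intros; apply csub; auto.
      intros s _. eapply Rle_trans. apply (IH s). eapply Rle_trans. 2: apply Hb.
      pose proof (bnd_nonneg A c n s HA ltac:(lra)). nra.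
    + change (snd (pic P Q y0 u0 (S (S n))) r) with (u0 + RInt (fun s => - P s * snd (pic P Q y0 u0 (S n)) s - Q s * fst (pic P Q y0 u0 (S n)) s) 0 r).
      change (snd (pic P Q y0 u0 (S n)) r) with (u0 + RInt (fun s => - P s * snd (pic P Q y0 u0 n) s - Q s * fst (pic P Q y0 u0 n) s) 0 r).
      rewrite addK2.
      rewrite RInt_minus_R. 2,3: intros; apply csub; apply cmul; auto; apply copp; auto.
      rewrite <- Heq.
      apply RInt_pow_bound. intros; apply csub; apply csub; apply cmul; auto; apply copp; auto.
      intros s _. eapply Rle_trans. 2: apply Hb.
      destruct (IH s) as [I1 I2].
      replace (- P s * snd (pic P Q y0 u0 (S n)) s - Q s * fst (pic P Q y0 u0 (S n)) s -
         (- P s * snd (pic P Q y0 u0 n) s - Q s * fst (pic P Q y0 u0 n) s))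
        with (- (P s * (snd (pic P Q y0 u0 (S n)) s - snd (pic P Q y0 u0 n) s)) - Q s * (fst (pic P Q y0 u0 (S n)) s - fst (pic P Q y0 u0 n) s)) by ring.
      unfold Rminus at 1. eapply Rle_trans. apply Rabs_triang. repeat rewrite ?Rabs_Ropp, ?Rabs_mult.
      pose proof (HPb s). pose proof (HQb s). pose proof (bnd_nonneg A c n s HA ltac:(lra)).
      pose proof (Rabs_pos (snd (pic P Q y0 u0 (S n)) s - snd (pic P Q y0 u0 n) s)).
      pose proof (Rabs_pos (fst (pic P Q y0 u0 (S n)) s - fst (pic P Q y0 u0 n) s)).
      assert (c = 1 + 2 * K) by reflexivity. nra.
Qed.


Lemma exsle (a b : nat -> R) : (forall n, Rabs (a n) <= b n) -> ex_series b -> ex_series a.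
Proof. intros H Hb. apply (ex_series_le (K:=R_AbsRing) (V:=R_CompleteNormedModule) a b); auto. Qed.

Lemma series_tail_bound (a b f : nat -> R) : (forall k, Rabs (a k) <= b k) -> ex_series b ->
  (forall k, a k = f (S k) - f k) -> forall n, Rabs (f O + Series a - f n) <= Series (fun k => b (n + k)%nat).
Proof.
  intros Hab Hb Ha n.
  assert (Hea : ex_series a). { apply (exsle a b); auto. }
  assert (Hbn : ex_series (fun k => b (n + k)%nat)) by (apply ex_series_incr_n; auto).
  assert (Hean : ex_series (fun k => Rabs (a (n + k)%nat))).
  { apply (exsle _ (fun k => b (n + k)%nat)); auto. intros k. rewrite Rabs_Rabsolu. auto. }
  replace (f O + Series a - f n) with (Series (fun k => a (n + k)%nat)).
  2:{ destruct n as [|m].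
      - simpl. rewrite (Series_ext _ a) by (intros; reflexivity). ring.
      - rewrite (Series_incr_n a (S m)) by (auto; lia). simpl pred.
        rewrite (sum_eq a (fun k => f (S k) - f k)) by (intros; auto).
        rewrite tele. ring. }
  eapply Rle_trans. apply Series_Rabs. auto.
  apply Series_le; auto. intros k. split. apply Rabs_pos. auto.
Qed.

Lemma tri3 (a b c : R) : Rabs (a + b - c) <= Rabs a + Rabs b + Rabs c.
Proof.
  unfold Rminus. eapply Rle_trans. apply Rabs_triang. rewrite Rabs_Ropp.
  pose proof (Rabs_triang a b). lra.
Qed.

Lemma deriv_int_c (g : R -> R) c r : (forall x, continuous g x) ->
  is_derive (fun b => c + RInt g 0 b) r (g r).
Proof.
  intros Hg. pose proof (is_derive_plus (fun _ => c) (fun b => RInt g 0 b) r 0 (g r) (is_derive_const c r) (int_deriv g r Hg)) as H.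
  unfold plus in H; simpl in H. rewrite Rplus_0_l in H. exact H.
Qed.

Definition small (t : R -> nat -> R) := forall R, 0 <= R -> forall eps, 0 < eps ->
  exists N, forall n, (N <= n)%nat -> t R n < eps.

Lemma unif_cont (F : R -> R) (Fn : nat -> R -> R) (t : R -> nat -> R) :
  (forall n x, continuous (Fn n) x) ->
  (forall R r n, 0 <= R -> Rabs r <= R -> Rabs (F r - Fn n r) <= t R n) ->
  small t -> forall x, continuous (F) x.
Proof.
  intros Hc Ht Hs x. apply eps_cont. intros eps He.
  set (R := Rabs x + 1). assert (HR : 0 <= R) by (unfold R; pose proof (Rabs_pos x); lra).
  destruct (Hs R HR (eps / 3)) as [N HN]. lra.
  destruct (cont_eps (Fn N) x (eps / 3) (Hc N x)) as [d [Hd Hdx]]. lra.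
  exists (Rmin d 1). split. apply Rmin_glb_lt; lra.
  intros s Hsx.
  assert (Rabs (s - x) < d) by (eapply Rlt_le_trans; [exact Hsx| apply Rmin_l]).
  assert (Rabs (s - x) < 1) by (eapply Rlt_le_trans; [exact Hsx| apply Rmin_r]).
  assert (Hs' : Rabs s <= R). { unfold R. replace s with ((s - x) + x) by ring.
    eapply Rle_trans. apply Rabs_triang. lra. }
  assert (Hx' : Rabs x <= R) by (unfold R; lra).
  pose proof (Ht R s N HR Hs'). pose proof (Ht R x N HR Hx'). pose proof (HN N (le_n _)).
  pose proof (Hdx s H).
  replace (F s - F x) with ((F s - Fn N s) + (Fn N s - Fn N x) - (F x - Fn N x)) by ring.
  pose proof (tri3 (F s - Fn N s) (Fn N s - Fn N x) (F x - Fn N x)). lra.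
Qed.

Lemma lim_int (F G : R -> R) (Fn Gn : nat -> R -> R) (c : R) (t tG : R -> nat -> R) :
  (forall n r, Fn (S n) r = c + RInt (Gn n) 0 r) ->
  (forall n x, continuous (Gn n) x) -> (forall x, continuous G x) ->
  (forall R r n, 0 <= R -> Rabs r <= R -> Rabs (F r - Fn n r) <= t R n) ->
  (forall R r n, 0 <= R -> Rabs r <= R -> Rabs (G r - Gn n r) <= tG R n) ->
  small t -> small tG -> forall r, F r = c + RInt G 0 r.
Proof.
  intros HF HGn HG Ht HtG Hs HsG r.
  assert (F r - c - RInt G 0 r = 0); [|lra].
  apply abs_le_eps. intros eps He.
  set (R := Rabs r). assert (HR : 0 <= R) by apply Rabs_pos.
  destruct (Hs R HR (eps / 2)) as [N1 HN1]. lra.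
  destruct (HsG R HR (eps / (2 * (R + 1)))) as [N2 HN2].
  { apply Rdiv_lt_0_compat; lra. }
  set (n := max N1 N2).
  assert (H1 : Rabs (F r - Fn (S n) r) <= t R (S n)) by (apply Ht; [exact HR | unfold R; lra]).
  assert (H2 : t R (S n) < eps / 2) by (apply HN1; unfold n; lia).
  assert (H3 : tG R n < eps / (2 * (R + 1))) by (apply HN2; unfold n; lia).
  assert (H4 : Rabs (RInt (fun s => Gn n s - G s) 0 r) <= tG R n * Rabs r ^ 1 / INR 1).
  { apply RInt_pow_bound. intros; apply csub; auto.
    intros s Hs'. rewrite pow_O, Rmult_1_r. rewrite Rabs_minus_sym. apply HtG. auto.
    unfold R. apply Rabs_le. destruct (Rle_or_lt 0 r).
    rewrite Rmin_left, Rmax_right in Hs' by lra. rewrite Rabs_pos_eq; lra.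
    rewrite Rmin_right, Rmax_left in Hs' by lra. rewrite Rabs_left; lra. }
  simpl in H4. rewrite Rmult_1_r, Rdiv_1_r in H4.
  rewrite <- RInt_minus_R in H4 by auto.
  rewrite HF in H1.
  replace (F r - c - RInt G 0 r) with ((F r - (c + RInt (Gn n) 0 r)) + (RInt (Gn n) 0 r - RInt G 0 r)) by ring.
  eapply Rle_lt_trans. apply Rabs_triang.
  assert (tG R n * Rabs r <= eps / 2).
  { fold R. assert (eps / (2 * (R + 1)) * R <= eps / 2).
    { unfold Rdiv. rewrite Rinv_mult. assert (0 < / (R + 1)) by (apply Rinv_0_lt_compat; lra).
      assert (/ (R + 1) * R <= 1). { apply (Rmult_le_reg_l (R + 1)). lra. rewrite <- Rmult_assoc, Rinv_r by lra. lra. }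
      assert (0 < eps * / 2) by lra. nra. }
    destruct (Rle_or_lt 0 (tG R n)); nra. }
  lra.
Qed.

Lemma ex_series_exp_like (A c R : R) : 0 <= A -> 0 <= c -> 0 <= R ->
  ex_series (fun n => A * c ^ n * R ^ (S n) / INR (fact (S n))).
Proof.
  intros HA Hc HR.
  assert (He : ex_series (fun n => (c * R) ^ n / INR (fact n))).
  { eexists. eapply is_series_ext. 2: apply (is_exp_Reals (c * R)).
    intros n. simpl. rewrite pow_n_pow. unfold scal; simpl; unfold mult; simpl. unfold Rdiv. ring. }
  apply (exsle _ (fun n => (A * R) * ((c * R) ^ n / INR (fact n)))).
  2:{ apply (ex_series_scal (K:=R_AbsRing) (V:=R_NormedModule) (A * R)) in He. eapply ex_series_ext. 2: exact He. intros; reflexivity. }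
  intros n. pose proof (INR_fact_pos n). pose proof (INR_fact_pos (S n)).
  assert (Hf : INR (fact n) <= INR (fact (S n))).
  { apply le_INR. rewrite fact_simpl. pose proof (Factorial.lt_O_fact n). nia. }
  assert (0 <= c ^ n) by (apply pow_le; auto). assert (0 <= R ^ n) by (apply pow_le; auto).
  rewrite Rabs_pos_eq.
  2:{ apply Rmult_le_pos. apply Rmult_le_pos. apply Rmult_le_pos; auto. apply pow_le; auto. left; apply Rinv_0_lt_compat; auto. }
  rewrite Rpow_mult_distr. simpl (R ^ S n). unfold Rdiv.
  assert (/ INR (fact (S n)) <= / INR (fact n)) by (apply Rinv_le_contravar; auto).
  assert (0 <= A * c ^ n * (R * R ^ n)) by (repeat apply Rmult_le_pos; auto).
  replace (A * R * (c ^ n * R ^ n * / INR (fact n))) with (A * c ^ n * (R * R ^ n) * / INR (fact n)) by ring.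
  apply Rmult_le_compat_l; auto.
Qed.

Lemma ode_exists (P Q : R -> R) (y0 u0 K : R) (HP : forall x, continuous P x) (HQ : forall x, continuous Q x)
  (HK : 0 <= K) (HPb : forall x, Rabs (P x) <= K) (HQb : forall x, Rabs (Q x) <= K) :
  exists y u : R -> R, y 0 = y0 /\ u 0 = u0 /\
    forall r, is_derive y r (u r) /\ is_derive u r (- P r * u r - Q r * y r).
Proof.
  set (A := Rabs u0 + K * Rabs u0 + K * Rabs y0). set (c := 1 + 2 * K).
  assert (HA : 0 <= A). { unfold A. pose proof (Rabs_pos u0). pose proof (Rabs_pos y0). nra. }
  assert (Hc : 1 <= c) by (unfold c; lra).
  set (yn := fun n => fst (pic P Q y0 u0 n)). set (un := fun n => snd (pic P Q y0 u0 n)).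
  set (bs := fun R n => A * c ^ n * R ^ (S n) / INR (fact (S n))).
  set (tl := fun R n => Series (fun k => bs R (n + k)%nat)).
  assert (Hbs : forall R, 0 <= R -> ex_series (bs R)) by (intros; apply ex_series_exp_like; lra).
  assert (Hbnd : forall R r n, Rabs r <= R -> bnd A c n r <= bs R n).
  { intros R r n Hr. unfold bnd, bs. pose proof (INR_fact_pos (S n)).
    unfold Rdiv. apply Rmult_le_compat_r. left; apply Rinv_0_lt_compat; auto.
    apply Rmult_le_compat_l. apply Rmult_le_pos; auto. apply pow_le; lra.
    apply pow_incr. split; auto. apply Rabs_pos. }
  pose proof (pic_cont P Q y0 u0 HP HQ) as Hcont.
  pose proof (pic_diff P Q y0 u0 K HP HQ HK HPb HQb) as Hdiff. fold A c in Hdiff.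
  set (y := fun r => y0 + Series (fun k => yn (S k) r - yn k r)).
  set (u := fun r => u0 + Series (fun k => un (S k) r - un k r)).
  assert (Hty : forall R r n, 0 <= R -> Rabs r <= R -> Rabs (y r - yn n r) <= tl R n).
  { intros R r n HR Hr. unfold y, tl.
    apply (series_tail_bound (fun k => yn (S k) r - yn k r) (bs R) (fun k => yn k r)); auto.
    intros k. eapply Rle_trans. apply (Hdiff k r). apply Hbnd; auto. }
  assert (Htu : forall R r n, 0 <= R -> Rabs r <= R -> Rabs (u r - un n r) <= tl R n).
  { intros R r n HR Hr. unfold u, tl.
    apply (series_tail_bound (fun k => un (S k) r - un k r) (bs R) (fun k => un k r)); auto.
    intros k. eapply Rle_trans. apply (Hdiff k r). apply Hbnd; auto. }
  assert (Hsm : small tl).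
  { intros R HR eps He. destruct (tail_small (bs R) (Hbs R HR) eps He) as [N HN].
    exists N. intros n Hn. specialize (HN n Hn). unfold tl. eapply Rle_lt_trans. apply Rle_abs. auto. }
  assert (Hsm2 : small (fun R n => 2 * K * tl R n)).
  { intros R HR eps He. destruct (Hsm R HR (eps / (2 * K + 1))) as [N HN].
    apply Rdiv_lt_0_compat; lra.
    exists N. intros n Hn. specialize (HN n Hn).
    assert (tl R n * (2 * K + 1) < eps).
    { apply (Rmult_lt_compat_r (2 * K + 1)) in HN. 2: lra. unfold Rdiv in HN. rewrite Rmult_assoc, Rinv_l, Rmult_1_r in HN by lra. auto. }
    nra. }
  assert (Hcy : forall x, continuous y x).
  { apply (unif_cont y yn tl); auto. intros n x; apply (Hcont n). }
  assert (Hcu : forall x, continuous u x).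
  { apply (unif_cont u un tl); auto. intros n x; apply (Hcont n). }
  assert (HG : forall x, continuous (fun s => - P s * u s - Q s * y s) x).
  { intros x. apply csub; apply cmul; auto. apply copp; auto. }
  assert (Hy : forall r, y r = y0 + RInt u 0 r).
  { apply (lim_int y u yn un y0 tl tl); auto.
    intros n x. apply (Hcont n). }
  assert (Hu : forall r, u r = u0 + RInt (fun s => - P s * u s - Q s * y s) 0 r).
  { apply (lim_int u _ un (fun n s => - P s * un n s - Q s * yn n s) u0 tl (fun R n => 2 * K * tl R n)); auto.
    intros n x. apply csub; apply cmul; try apply (Hcont n). apply copp; auto. auto.
    intros R r n HR Hr. pose proof (Hty R r n HR Hr). pose proof (Htu R r n HR Hr).
    replace (- P r * u r - Q r * y r - (- P r * un n r - Q r * yn n r)) with (- (P r * (u r - un n r)) - Q r * (y r - yn n r)) by ring.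
    unfold Rminus at 1. eapply Rle_trans. apply Rabs_triang. repeat rewrite ?Rabs_Ropp, ?Rabs_mult.
    pose proof (HPb r). pose proof (HQb r). pose proof (Rabs_pos (u r - un n r)). pose proof (Rabs_pos (y r - yn n r)).
    pose proof (Rabs_pos (P r)). pose proof (Rabs_pos (Q r)). nra. }
  exists y, u. split; [|split].
  - rewrite Hy. rewrite RInt_point. unfold zero; simpl. ring.
  - rewrite Hu. rewrite RInt_point. unfold zero; simpl. ring.
  - intros r. split.
    + apply (is_derive_ext (fun b => y0 + RInt u 0 b)). intros; symmetry; auto. apply deriv_int_c; auto.
    + apply (is_derive_ext (fun b => u0 + RInt (fun s => - P s * u s - Q s * y s) 0 b)). intros; symmetry; auto.
      apply (deriv_int_c (fun s => - P s * u s - Q s * y s)); auto.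
Qed.


Lemma isd_cont (F : R -> R) x l : is_derive F x l -> continuous F x.
Proof. intros H. apply exdc. exists l. exact H. Qed.

Lemma gron_up (F dF : R -> R) C D r : 0 <= C -> 0 <= D -> 0 <= r ->
  (forall x, 0 <= x <= r -> is_derive F x (dF x)) ->
  (forall x, 0 <= x <= r -> dF x <= C * F x + D) ->
  F r <= (F 0 + D * r) * exp (C * r).
Proof.
  intros HC HD Hr Hd Hb.
  set (G := fun x => F x * exp (- C * x) - D * x).
  set (dG := fun x => dF x * exp (- C * x) + F x * (- C * exp (- C * x)) - D).
  assert (HG : forall x, 0 <= x <= r -> is_derive G x (dG x)).
  { intros x Hx. unfold G, dG. apply (is_derive_minus (fun x => F x * exp (- C * x)) (fun x => D * x)).
    apply (is_derive_mult F (fun x => exp (- C * x))). auto. auto_derive. auto. ring.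
    intros; apply Rmult_comm. auto_derive. auto. ring. }
  assert (H := diff_le_open G dG 0 r 0 Hr).
  assert (G r - G 0 <= 0 * (r - 0)).
  { apply H. intros; apply HG; lra.
    intros x Hx. unfold dG. assert (exp (- C * x) <= 1).
    { rewrite <- exp_0. destruct (Req_dec C 0). subst. replace (- 0 * x) with 0 by ring. lra. left; apply exp_increasing. assert (0 < C) by lra. nra. }
    pose proof (exp_pos (- C * x)). pose proof (Hb x ltac:(lra)). nra.
    intros x Hx. apply (isd_cont G x (dG x)). apply HG; auto. }
  unfold G in H0. rewrite Rmult_0_r, Rmult_0_l, Rmult_0_r, exp_0 in H0.
  assert (F r * exp (- C * r) <= F 0 + D * r) by lra.
  apply (Rmult_le_compat_r (exp (C * r))) in H1. 2: left; apply exp_pos.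
  rewrite Rmult_assoc, <- exp_plus in H1. replace (- C * r + C * r) with 0 in H1 by ring.
  rewrite exp_0, Rmult_1_r in H1. auto.
Qed.

Lemma gron_down (F dF : R -> R) C r : 0 <= r ->
  (forall x, 0 <= x <= r -> is_derive F x (dF x)) ->
  (forall x, 0 <= x <= r -> - C * F x <= dF x) ->
  F 0 <= F r * exp (C * r).
Proof.
  intros Hr Hd Hb.
  set (G := fun x => F x * exp (C * x)).
  set (dG := fun x => dF x * exp (C * x) + F x * (C * exp (C * x))).
  assert (HG : forall x, 0 <= x <= r -> is_derive G x (dG x)).
  { intros x Hx. unfold G, dG. apply (is_derive_mult F (fun x => exp (C * x))). auto. auto_derive. auto. ring.
    intros; apply Rmult_comm. }
  assert (0 * (r - 0) <= G r - G 0).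
  { apply (diff_ge_open G dG). lra. intros; apply HG; lra.
    intros x Hx. unfold dG. pose proof (exp_pos (C * x)). pose proof (Hb x ltac:(lra)). nra.
    intros x Hx. apply (isd_cont G x (dG x)). apply HG; auto. }
  unfold G in H. rewrite Rmult_0_r, Rmult_0_l, exp_0 in H. lra.
Qed.

Lemma isd_eq (f g : R -> R) x l m : is_derive f x l -> (forall t, f t = g t) -> l = m -> is_derive g x m.
Proof. intros H E ->. eapply is_derive_ext. exact E. exact H. Qed.

Definition sol (P Q : R -> R) (lam al : R) (y u : R -> R) :=
  y 0 = 1 /\ u 0 = al /\ forall r, is_derive y r (u r) /\ is_derive u r (- P r * u r - (Q r + lam) * y r).

Lemma two_prod (y u t T : R) : Rabs t <= T -> 2 * y * u * t <= T * (y ^ 2 + u ^ 2).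
Proof.
  intros Ht.
  assert (2 * Rabs y * Rabs u <= y ^ 2 + u ^ 2).
  { pose proof (pow2_ge_0 (Rabs y - Rabs u)). rewrite <- (pow2_abs y), <- (pow2_abs u). nra. }
  assert (2 * y * u * t <= Rabs (2 * y * u * t)) by apply Rle_abs.
  rewrite !Rabs_mult in H0. rewrite (Rabs_pos_eq 2) in H0 by lra.
  pose proof (Rabs_pos y). pose proof (Rabs_pos u). pose proof (Rabs_pos t).
  assert (0 <= Rabs y * Rabs u) by nra. nra.
Qed.

Lemma energy_deriv (P Q : R -> R) lam al y u r : sol P Q lam al y u ->
  is_derive (fun x => y x ^ 2 + u x ^ 2) r (2 * y r * u r * (1 - Q r - lam) - 2 * P r * u r ^ 2).
Proof.
  intros [_ [_ Hd]]. destruct (Hd r) as [Hy Hu].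
  eapply is_derive_ext. intros; reflexivity.
  assert (H := is_derive_plus _ _ r _ _ (is_derive_pow y 2 r _ Hy) (is_derive_pow u 2 r _ Hu)).
  unfold plus in H; simpl in H. eapply is_derive_ext. 2: { replace (2 * y r * u r * (1 - Q r - lam) - 2 * P r * u r ^ 2) with (2 * u r * y r ^ 1 + 2 * (- P r * u r - (Q r + lam) * y r) * u r ^ 1). exact H. simpl. ring. }
  intros; reflexivity.
Qed.

Lemma energy_bound (P Q : R -> R) K lam al y u r : sol P Q lam al y u ->
  0 <= K -> (forall x, Rabs (P x) <= K) -> (forall x, Rabs (Q x) <= K) -> 0 <= r ->
  y r ^ 2 + u r ^ 2 <= (1 + al ^ 2) * exp ((1 + 3 * K + Rabs lam) * r).
Proof.
  intros Hs HK HP HQ Hr.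
  assert (H0 : y 0 ^ 2 + u 0 ^ 2 = 1 + al ^ 2). { destruct Hs as [-> [-> _]]. ring. }
  assert (Hg : y r ^ 2 + u r ^ 2 <= (y 0 ^ 2 + u 0 ^ 2 + 0 * r) * exp ((1 + 3 * K + Rabs lam) * r)).
  2:{ rewrite H0, Rmult_0_l, Rplus_0_r in Hg. exact Hg. }
  apply (gron_up (fun x => y x ^ 2 + u x ^ 2) (fun x => 2 * y x * u x * (1 - Q x - lam) - 2 * P x * u x ^ 2)).
  pose proof (Rabs_pos lam); lra. lra. auto.
  intros x _. apply (energy_deriv P Q lam al); auto.
  intros x _. assert (Rabs (1 - Q x - lam) <= 1 + K + Rabs lam).
  { unfold Rminus. eapply Rle_trans. apply Rabs_triang. eapply Rle_trans. apply Rplus_le_compat_r. apply Rabs_triang.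
    rewrite Rabs_R1, !Rabs_Ropp. pose proof (HQ x). lra. }
  pose proof (two_prod (y x) (u x) _ _ H). pose proof (HP x). pose proof (Rle_abs (P x)). pose proof (Rle_abs (- P x)) as HPn. rewrite Rabs_Ropp in HPn.
  pose proof (pow2_ge_0 (u x)). pose proof (pow2_ge_0 (y x)). nra.
Qed.

Lemma uniq_zero (P Q : R -> R) K lam al y u r0 : sol P Q lam al y u ->
  0 <= K -> (forall x, Rabs (P x) <= K) -> (forall x, Rabs (Q x) <= K) -> 0 <= r0 ->
  y r0 = 0 -> u r0 = 0 -> False.
Proof.
  intros Hs HK HP HQ Hr Hy Hu.
  assert (H0 : y 0 ^ 2 + u 0 ^ 2 = 1 + al ^ 2). { destruct Hs as [-> [-> _]]. ring. }
  assert (y 0 ^ 2 + u 0 ^ 2 <= (y r0 ^ 2 + u r0 ^ 2) * exp ((1 + 3 * K + Rabs lam) * r0)).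
  { apply (gron_down (fun x => y x ^ 2 + u x ^ 2) (fun x => 2 * y x * u x * (1 - Q x - lam) - 2 * P x * u x ^ 2)). auto.
    intros x _. apply (energy_deriv P Q lam al); auto.
    intros x _. assert (Rabs (- (1 - Q x - lam)) <= 1 + K + Rabs lam).
    { rewrite Rabs_Ropp. unfold Rminus. eapply Rle_trans. apply Rabs_triang. eapply Rle_trans. apply Rplus_le_compat_r. apply Rabs_triang.
      rewrite Rabs_R1, !Rabs_Ropp. pose proof (HQ x). lra. }
    pose proof (two_prod (y x) (u x) _ _ H). pose proof (HP x). pose proof (Rle_abs (P x)).
    pose proof (pow2_ge_0 (u x)). pose proof (pow2_ge_0 (y x)). nra. }
  rewrite Hy, Hu in H. pose proof (pow2_ge_0 al). lra.
Qed.

Lemma lip_lam (P Q : R -> R) K Lm al a : 0 <= K -> (forall x, Rabs (P x) <= K) -> (forall x, Rabs (Q x) <= K) ->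
  0 <= Lm -> 0 <= a -> exists L, 0 <= L /\ forall lam mu y1 u1 y2 u2, Rabs lam <= Lm -> Rabs mu <= Lm ->
  sol P Q lam al y1 u1 -> sol P Q mu al y2 u2 -> forall r, 0 <= r <= a ->
  (y1 r - y2 r) ^ 2 + (u1 r - u2 r) ^ 2 <= L * (lam - mu) ^ 2.
Proof.
  intros HK HP HQ HLm Ha.
  set (M := (1 + al ^ 2) * exp ((1 + 3 * K + Lm) * a)). set (C := 2 + 3 * K + Lm).
  assert (HM : 0 <= M). { unfold M. pose proof (exp_pos ((1 + 3 * K + Lm) * a)). pose proof (pow2_ge_0 al). nra. }
  exists (M * a * exp (C * a)). split. { pose proof (exp_pos (C * a)). apply Rmult_le_pos; [apply Rmult_le_pos|]; lra. }
  intros lam mu y1 u1 y2 u2 Hl Hm S1 S2 r Hr.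
  set (dl := lam - mu).
  assert (Hy2 : forall x, 0 <= x <= a -> y2 x ^ 2 <= M).
  { intros x Hx. pose proof (energy_bound P Q K mu al y2 u2 x S2 HK HP HQ ltac:(lra)).
    pose proof (pow2_ge_0 (u2 x)).
    assert (exp ((1 + 3 * K + Rabs mu) * x) <= exp ((1 + 3 * K + Lm) * a)).
    { destruct (Req_dec ((1 + 3 * K + Rabs mu) * x) ((1 + 3 * K + Lm) * a)) as [E|E]. rewrite E; lra.
      left. apply exp_increasing. pose proof (Rabs_pos mu).
      assert ((1 + 3 * K + Rabs mu) * x <= (1 + 3 * K + Lm) * a). { apply Rmult_le_compat; lra. } lra. }
    unfold M. pose proof (pow2_ge_0 al). nra. }
  assert (Hg : (y1 r - y2 r) ^ 2 + (u1 r - u2 r) ^ 2 <=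
     (((y1 0 - y2 0) ^ 2 + (u1 0 - u2 0) ^ 2) + (dl ^ 2 * M) * r) * exp (C * r)).
  { apply (gron_up (fun x => (y1 x - y2 x) ^ 2 + (u1 x - u2 x) ^ 2)
      (fun x => 2 * (y1 x - y2 x) * (u1 x - u2 x) * (1 - Q x - lam) - 2 * P x * (u1 x - u2 x) ^ 2 - 2 * (u1 x - u2 x) * dl * y2 x)).
    unfold C; lra. pose proof (pow2_ge_0 dl); nra. lra.
    - intros x _. destruct S1 as [_ [_ D1]]. destruct S2 as [_ [_ D2]].
      destruct (D1 x) as [Hy1 Hu1]. destruct (D2 x) as [Hy2' Hu2].
      assert (Hd := is_derive_minus _ _ x _ _ Hy1 Hy2'). assert (He := is_derive_minus _ _ x _ _ Hu1 Hu2).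
      assert (H := is_derive_plus _ _ x _ _ (is_derive_pow _ 2 x _ Hd) (is_derive_pow _ 2 x _ He)).
      apply (isd_eq _ _ x _ _ H). intros t. unfold minus, plus, opp; simpl. ring.
      unfold minus, plus, opp, dl; simpl. ring.
    - intros x Hx. pose proof (Hy2 x ltac:(lra)).
      assert (Rabs (1 - Q x - lam) <= 1 + K + Lm).
      { unfold Rminus. eapply Rle_trans. apply Rabs_triang. eapply Rle_trans. apply Rplus_le_compat_r. apply Rabs_triang.
        rewrite Rabs_R1, !Rabs_Ropp. pose proof (HQ x). lra. }
      pose proof (two_prod (y1 x - y2 x) (u1 x - u2 x) _ _ H0).
      pose proof (HP x). pose proof (Rle_abs (- P x)) as HPn. rewrite Rabs_Ropp in HPn.
      pose proof (pow2_ge_0 (u1 x - u2 x)). pose proof (pow2_ge_0 (y1 x - y2 x)).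
      assert (- (2 * (u1 x - u2 x) * dl * y2 x) <= (u1 x - u2 x) ^ 2 + dl ^ 2 * y2 x ^ 2).
      { pose proof (pow2_ge_0 (u1 x - u2 x + dl * y2 x)). nra. }
      assert (dl ^ 2 * y2 x ^ 2 <= dl ^ 2 * M) by (apply Rmult_le_compat_l; auto; apply pow2_ge_0).
      unfold C. nra. }
  destruct S1 as [A1 [B1 _]]. destruct S2 as [A2 [B2 _]].
  rewrite A1, A2, B1, B2 in Hg. replace ((1 - 1) ^ 2 + (al - al) ^ 2) with 0 in Hg by ring.
  fold dl. eapply Rle_trans. exact Hg.
  assert (exp (C * r) <= exp (C * a)).
  { destruct (Req_dec r a). subst; lra. left; apply exp_increasing. unfold C. apply Rmult_lt_compat_l; lra. }
  pose proof (exp_pos (C * r)). pose proof (pow2_ge_0 dl).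
  assert (dl ^ 2 * M * r <= dl ^ 2 * M * a) by (apply Rmult_le_compat_l; [apply Rmult_le_pos|]; lra).
  assert (0 <= dl ^ 2 * M * r) by (apply Rmult_le_pos; [apply Rmult_le_pos|]; lra).
  replace (M * a * exp (C * a) * dl ^ 2) with ((dl ^ 2 * M * a) * exp (C * a)) by ring.
  rewrite Rplus_0_l. apply Rmult_le_compat; lra.
Qed.

Lemma Rmin_abs (a b : R) : Rmin a b = (a + b - Rabs (a - b)) / 2.
Proof. unfold Rmin. destruct (Rle_dec a b). rewrite Rabs_left1 by lra. field. rewrite Rabs_pos_eq by lra. field. Qed.

Lemma cmin (f g : R -> R) x : continuous f x -> continuous g x -> continuous (fun s => Rmin (f s) (g s)) x.
Proof.
  intros Hf Hg. apply (continuous_ext (fun s => (f s + g s - Rabs (f s - g s)) / 2)).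
  intros; rewrite Rmin_abs; auto.
  apply (cmul (fun s => f s + g s - Rabs (f s - g s)) (fun _ => / 2)). apply csub. apply cadd; auto.
  apply cont_abs. apply csub; auto. apply cconst.
Qed.

Lemma pos_neg_lam (P Q : R -> R) K al a : 0 <= K -> (forall x, Rabs (P x) <= K) -> (forall x, Rabs (Q x) <= K) ->
  0 < a -> exists Lam, forall lam y u, lam <= - Lam -> sol P Q lam al y u ->
  (forall r, 0 <= r <= a -> 0 < y r) /\ 0 < u a + al * y a.
Proof.
  intros HK HP HQ Ha.
  set (c := (2 * Rabs al + 2) / a). set (G := Rabs al + 1 + c * a).
  assert (Hc : 0 <= c). { unfold c. pose proof (Rabs_pos al). apply Rdiv_le_0_compat; lra. }
  assert (Hca : c * a = 2 * Rabs al + 2). { unfold c. field. lra. }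
  exists (1 + K + c + (K + G) * G). intros lam y u Hlam Hs.
  set (g := fun x => al - 1 + c * x).
  assert (Hg : forall x, 0 <= x <= a -> Rabs (g x) <= G).
  { intros x Hx. unfold g, G. unfold Rminus. eapply Rle_trans. apply Rabs_triang. eapply Rle_trans. apply Rplus_le_compat_r. apply Rabs_triang.
    rewrite Rabs_Ropp, Rabs_R1. rewrite (Rabs_pos_eq (c * x)) by nra. assert (c * x <= c * a) by nra. lra. }
  assert (HG : 0 <= G). { unfold G. pose proof (Rabs_pos al). nra. }
  destruct Hs as [Hy0 [Hu0 Hd]].
  set (s := fun x => u x - g x * y x).
  set (m := fun x => - lam - Q x - c - (P x + g x) * g x).
  assert (Hds : forall x, is_derive s x (- (P x + g x) * s x + m x * y x)).
  { intros x. destruct (Hd x) as [Hy Hu].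
    assert (Hgd : is_derive g x c). { unfold g. auto_derive. auto. ring. }
    assert (H := is_derive_minus _ _ x _ _ Hu (is_derive_mult _ _ x _ _ Hgd Hy (fun a b => Rmult_comm a b))).
    apply (isd_eq _ _ x _ _ H). intros; reflexivity. unfold s, m, minus, plus, opp, mult; simpl. ring. }
  assert (Hm : forall x, 0 <= x <= a -> 1 <= m x).
  { intros x Hx. unfold m. pose proof (HQ x). pose proof (Rle_abs (Q x)). pose proof (Hg x Hx).
    pose proof (HP x). assert (Rabs ((P x + g x) * g x) <= (K + G) * G).
    { rewrite Rabs_mult. apply Rmult_le_compat; try apply Rabs_pos. eapply Rle_trans. apply Rabs_triang. lra. lra. }
    pose proof (Rle_abs ((P x + g x) * g x)). lra. }
  assert (Hcs : forall x, continuous s x) by (intros x; apply (isd_cont _ _ _ (Hds x))).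
  assert (Hcy : forall x, continuous y x) by (intros x; apply (isd_cont _ _ _ (proj1 (Hd x)))).
  set (h := fun x => Rmin (s x) (y x)).
  assert (Hs0 : s 0 = 1). { unfold s, g. rewrite Hy0, Hu0. ring. }
  assert (Hpos : forall x, 0 <= x <= a -> 0 < h x).
  { apply NNPP. intros Hn. apply not_all_ex_not in Hn. destruct Hn as [x0 Hx0].
    apply imply_to_and in Hx0. destruct Hx0 as [Hx0 Hx0n]. apply Rnot_lt_le in Hx0n.
    destruct (first_zero h x0) as [rs [Hrs [Hhr Hbef]]]; auto. lra.
    intros; apply cmin; auto. unfold h. rewrite Hs0, Hy0. rewrite Rmin_left; lra.
    assert (Hall : forall x, 0 <= x <= rs -> 0 <= s x /\ 0 <= y x).
    { intros x Hx. destruct (Req_dec x rs) as [->|Hne].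
      - unfold h, Rmin in Hhr. destruct (Rle_dec (s rs) (y rs)); split; lra.
      - pose proof (Hbef x ltac:(lra)). unfold h, Rmin in H. destruct (Rle_dec (s x) (y x)); lra. }
    assert (Hyr : 0 < y rs).
    { assert (y 0 <= y rs * exp (G * rs)).
      { apply (gron_down y u G rs). lra. intros; apply Hd.
        intros x Hx. destruct (Hall x Hx) as [Hsx Hyx]. pose proof (Hg x ltac:(lra)).
        pose proof (Rle_abs (- g x)). rewrite Rabs_Ropp in H0.
        replace (u x) with (s x + g x * y x) by (unfold s; ring). nra. }
      rewrite Hy0 in H. pose proof (exp_pos (G * rs)). destruct (Rle_or_lt (y rs) 0); nra. }
    assert (Hsr : s rs = 0). { unfold h, Rmin in Hhr. destruct (Rle_dec (s rs) (y rs)); lra. }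
    assert (Hle := deriv_left_min s rs _ rs ltac:(lra) (Hds rs)).
    assert (- (P rs + g rs) * s rs + m rs * y rs <= 0).
    { apply Hle. intros hh Hh. rewrite Hsr. destruct (Hall (rs + hh) ltac:(lra)); auto. }
    rewrite Hsr in H. pose proof (Hm rs ltac:(lra)). nra. }
  split.
  - intros r Hr. pose proof (Hpos r Hr). unfold h, Rmin in H. destruct (Rle_dec (s r) (y r)); lra.
  - pose proof (Hpos a ltac:(lra)). unfold h, Rmin in H.
    assert (0 < s a /\ 0 < y a) by (destruct (Rle_dec (s a) (y a)); lra).
    replace (u a + al * y a) with (s a + (g a + al) * y a) by (unfold s; ring).
    assert (1 <= g a + al). { unfold g. rewrite Hca. pose proof (Rle_abs (- al)). rewrite Rabs_Ropp in H1. lra. }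
    nra.
Qed.


Lemma sq_abs_le (x y : R) : 0 <= y -> x ^ 2 <= y ^ 2 -> Rabs x <= y.
Proof.
  intros Hy H. rewrite <- (pow2_abs x) in H. pose proof (Rabs_pos x).
  destruct (Rle_or_lt (Rabs x) y); auto. nra.
Qed.

Lemma eig_exists (P Q : R -> R) K al a (HK : 0 <= K) (HP : forall x, Rabs (P x) <= K)
  (HQ : forall x, Rabs (Q x) <= K) (Ha : 0 < a) (Y U : R -> R -> R)
  (HYU : forall lam, sol P Q lam al (Y lam) (U lam)) (lam0 : R) (Hl0 : lam0 < 0)
  (Hpic : (forall r, 0 <= r <= a -> 0 < Y lam0 r) -> U lam0 a + al * Y lam0 a < 0) :
  exists lam, lam < 0 /\ U lam a + al * Y lam a = 0.
Proof.
  destruct (pos_neg_lam P Q K al a HK HP HQ Ha) as [Lam HLam].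
  set (Lb := Rmin (- Lam) (lam0 - 1)).
  assert (HLb1 : Lb <= - Lam) by apply Rmin_l. assert (HLb2 : Lb <= lam0 - 1) by apply Rmin_r.
  set (Lm := - Lb).
  destruct (lip_lam P Q K Lm al a HK HP HQ ltac:(unfold Lm; lra) ltac:(lra)) as [L [HL Hlip]].
  set (L1 := sqrt L).
  assert (HL1 : 0 <= L1) by apply sqrt_pos.
  set (B := fun lam => U lam a + al * Y lam a).
  assert (Hlip1 : forall lam mu r, Lb <= lam <= 0 -> Lb <= mu <= 0 -> 0 <= r <= a ->
     Rabs (Y lam r - Y mu r) <= L1 * Rabs (lam - mu) /\ Rabs (U lam r - U mu r) <= L1 * Rabs (lam - mu)).
  { intros lam mu r Hl Hm Hr.
    assert (Hb := Hlip lam mu (Y lam) (U lam) (Y mu) (U mu)).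
    assert (Rabs lam <= Lm) by (unfold Lm; rewrite Rabs_left1; lra).
    assert (Rabs mu <= Lm) by (unfold Lm; rewrite Rabs_left1; lra).
    specialize (Hb H H0 (HYU lam) (HYU mu) r Hr).
    assert (E : (L1 * Rabs (lam - mu)) ^ 2 = L * (lam - mu) ^ 2).
    { rewrite Rpow_mult_distr, pow2_abs. unfold L1. rewrite <- Rsqr_pow2, Rsqr_sqrt by auto. auto. }
    assert (0 <= L1 * Rabs (lam - mu)) by (apply Rmult_le_pos; auto; apply Rabs_pos).
    pose proof (pow2_ge_0 (Y lam r - Y mu r)). pose proof (pow2_ge_0 (U lam r - U mu r)).
    split; apply sq_abs_le; auto; lra. }
  assert (HlipB : forall lam mu, Lb <= lam <= 0 -> Lb <= mu <= 0 ->
     Rabs (B lam - B mu) <= (1 + Rabs al) * L1 * Rabs (lam - mu)).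
  { intros lam mu Hl Hm. destruct (Hlip1 lam mu a Hl Hm ltac:(lra)) as [H1 H2]. unfold B.
    replace (U lam a + al * Y lam a - (U mu a + al * Y mu a)) with ((U lam a - U mu a) + al * (Y lam a - Y mu a)) by ring.
    eapply Rle_trans. apply Rabs_triang. rewrite Rabs_mult.
    pose proof (Rabs_pos al). pose proof (Rabs_pos (Y lam a - Y mu a)).
    assert (Rabs al * Rabs (Y lam a - Y mu a) <= Rabs al * (L1 * Rabs (lam - mu))) by (apply Rmult_le_compat_l; auto). nra. }
  set (good := fun lam => (forall r, 0 <= r <= a -> 0 < Y lam r) /\ 0 < B lam).
  assert (Hgood0 : good Lb). { apply (HLam Lb (Y Lb) (U Lb)); auto. }
  assert (Hnot0 : ~ good lam0). { intros [H1 H2]. specialize (Hpic H1). unfold B in H2. lra. }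
  set (T := fun lam => Lb <= lam <= lam0 /\ forall mu, Lb <= mu <= lam -> good mu).
  assert (HTb : bound T). { exists lam0. intros x [Hx _]. lra. }
  assert (HTe : exists x, T x). { exists Lb. split. lra. intros mu Hmu. replace mu with Lb by lra. auto. }
  destruct (completeness T HTb HTe) as [lp [Hub Hlub]].
  assert (Hlp1 : Lb <= lp). { apply Hub. split. lra. intros mu Hmu. replace mu with Lb by lra. auto. }
  assert (Hlp2 : lp <= lam0). { apply Hlub. intros x [Hx _]. lra. }
  assert (Hbef : forall mu, Lb <= mu < lp -> good mu).
  { intros mu Hmu.
    assert (~ (forall e, T e -> e <= mu)). { intros Hcon. specialize (Hlub mu Hcon). lra. }
    apply not_all_ex_not in H. destruct H as [e He'].
    apply imply_to_and in He'. destruct He' as [[He1 He2] He3]. apply He2. lra. }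
  assert (Happrox : forall eps, 0 < eps -> exists mu, Lb <= mu <= lp /\ Rabs (mu - lp) < eps /\ good mu).
  { intros eps He. destruct (Req_dec lp Lb) as [E|E].
    - exists Lb. split. lra. split. rewrite E, Rminus_eq_0, Rabs_R0. auto. auto.
    - exists (Rmax Lb (lp - eps / 2)). split. split. apply Rmax_l. apply Rmax_lub; lra.
      assert (Rmax Lb (lp - eps / 2) <= lp) by (apply Rmax_lub; lra).
      split. rewrite Rabs_left1. assert (lp - eps / 2 <= Rmax Lb (lp - eps / 2)) by apply Rmax_r. lra. lra.
      apply Hbef. split. apply Rmax_l. apply Rmax_lub_lt; lra. }
  assert (HYnn : forall r, 0 <= r <= a -> 0 <= Y lp r).
  { intros r Hr. destruct (Rle_or_lt 0 (Y lp r)) as [|Hn]; auto. exfalso.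
    destruct (Happrox (- Y lp r / (L1 + 1))) as [mu [Hmu [Hd [Hg _]]]].
    apply Rdiv_lt_0_compat; lra.
    specialize (Hg r Hr). destruct (Hlip1 mu lp r ltac:(lra) ltac:(lra) Hr) as [H1 _].
    assert (L1 * Rabs (mu - lp) < - Y lp r).
    { apply Rle_lt_trans with ((L1 + 1) * Rabs (mu - lp)). pose proof (Rabs_pos (mu - lp)). nra.
      apply (Rmult_lt_compat_l (L1 + 1)) in Hd. 2: lra. replace ((L1 + 1) * (- Y lp r / (L1 + 1))) with (- Y lp r) in Hd by (field; lra). auto. }
    pose proof (Rle_abs (Y mu r - Y lp r)). lra. }
  assert (HBnn : 0 <= B lp).
  { destruct (Rle_or_lt 0 (B lp)) as [|Hn]; auto. exfalso.
    set (k := (1 + Rabs al) * L1 + 1).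
    assert (Hk : 0 < k). { unfold k. pose proof (Rabs_pos al). nra. }
    destruct (Happrox (- B lp / k)) as [mu [Hmu [Hd [_ Hg]]]].
    apply Rdiv_lt_0_compat; lra.
    pose proof (HlipB mu lp ltac:(lra) ltac:(lra)).
    assert ((1 + Rabs al) * L1 * Rabs (mu - lp) < - B lp).
    { apply Rle_lt_trans with (k * Rabs (mu - lp)). unfold k. pose proof (Rabs_pos (mu - lp)). nra.
      apply (Rmult_lt_compat_l k) in Hd. 2: lra. replace (k * (- B lp / k)) with (- B lp) in Hd by (field; lra). auto. }
    pose proof (Rle_abs (B mu - B lp)). lra. }
  assert (Hngood : ~ good lp).
  { intros [Hy Hb]. destruct (Req_dec lp lam0) as [E|E]. apply Hnot0. rewrite <- E. split; auto.
    destruct (continuity_ab_min (Y lp) 0 a ltac:(lra)) as [xm [Hxm Hxmr]].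
    { intros c Hc. apply cont_pt. apply (isd_cont _ _ _ (proj1 (proj2 (proj2 (HYU lp)) c))). }
    assert (Hm : 0 < Y lp xm) by auto.
    set (k := (1 + Rabs al) * L1 + 1).
    assert (Hk : 0 < k). { unfold k. pose proof (Rabs_pos al). nra. }
    set (dd := Rmin (Rmin (Y lp xm / (L1 + 1)) (B lp / k)) ((lam0 - lp) / 2)).
    assert (Hdd : 0 < dd). { unfold dd. apply Rmin_glb_lt. apply Rmin_glb_lt; apply Rdiv_lt_0_compat; lra. lra. }
    assert (Hdd1 : dd <= Y lp xm / (L1 + 1)) by (unfold dd; eapply Rle_trans; [apply Rmin_l|apply Rmin_l]).
    assert (Hdd2 : dd <= B lp / k) by (unfold dd; eapply Rle_trans; [apply Rmin_l|apply Rmin_r]).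
    assert (Hdd3 : dd <= (lam0 - lp) / 2) by (unfold dd; apply Rmin_r).
    assert (T (lp + dd)).
    { split. lra. intros mu Hmu. destruct (Rlt_or_le mu lp) as [Hlt|Hge]. apply Hbef; lra.
      assert (Habs : Rabs (mu - lp) <= dd) by (rewrite Rabs_pos_eq; lra).
      split.
      - intros r Hr. destruct (Hlip1 mu lp r ltac:(lra) ltac:(lra) Hr) as [H1 _].
        pose proof (Hxm r Hr). pose proof (Rle_abs (- (Y mu r - Y lp r))). rewrite Rabs_Ropp in H0.
        assert (L1 * Rabs (mu - lp) < Y lp xm).
        { apply Rle_lt_trans with (L1 * dd). apply Rmult_le_compat_l; auto.
          apply (Rmult_le_compat_l (L1 + 1)) in Hdd1. 2: lra. replace ((L1 + 1) * (Y lp xm / (L1 + 1))) with (Y lp xm) in Hdd1 by (field; lra). nra. }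
        lra.
      - pose proof (HlipB mu lp ltac:(lra) ltac:(lra)). pose proof (Rle_abs (- (B mu - B lp))). rewrite Rabs_Ropp in H0.
        assert ((1 + Rabs al) * L1 * Rabs (mu - lp) < B lp).
        { apply Rle_lt_trans with ((1 + Rabs al) * L1 * dd). apply Rmult_le_compat_l; auto. pose proof (Rabs_pos al); nra.
          apply (Rmult_le_compat_l k) in Hdd2. 2: lra. replace (k * (B lp / k)) with (B lp) in Hdd2 by (field; lra). unfold k in Hdd2. nra. }
        lra. }
    specialize (Hub _ H). lra. }
  assert (Hsol := HYU lp). destruct Hsol as [Hy0 [Hu0 Hd]].
  destruct (Req_dec (B lp) 0) as [HB0|HB0].
  { exists lp. split. lra. exact HB0. }
  exfalso. apply Hngood. split; [|lra].
  intros r Hr. destruct (Req_dec (Y lp r) 0) as [Hz|Hnz]; [|pose proof (HYnn r Hr); lra].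
  exfalso.
  assert (Hr0 : r <> 0) by (intros ->; lra).
  destruct (Req_dec r a) as [->|Hra].
  - assert (U lp a <= 0).
    { apply (deriv_left_min (Y lp) a (U lp a) a). lra. apply Hd.
      intros hh Hh. rewrite Hz. apply HYnn. lra. }
    assert (U lp a = 0). { unfold B in HBnn. rewrite Hz in HBnn. lra. }
    apply (uniq_zero P Q K lp al (Y lp) (U lp) a); auto. lra.
  - set (d := Rmin r (a - r)). assert (Hd0 : 0 < d) by (unfold d; apply Rmin_glb_lt; lra).
    assert (d <= r) by apply Rmin_l. assert (d <= a - r) by apply Rmin_r.
    assert (U lp r <= 0).
    { apply (deriv_left_min (Y lp) r (U lp r) d). lra. apply Hd.
      intros hh Hh. rewrite Hz. apply HYnn. lra. }
    assert (0 <= U lp r).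
    { apply (deriv_right_min (Y lp) r (U lp r) d). lra. apply Hd.
      intros hh Hh. rewrite Hz. apply HYnn. lra. }
    apply (uniq_zero P Q K lp al (Y lp) (U lp) r); auto; lra.
Qed.


Lemma picone (psi f v P Q y u : R -> R) a al lam M :
  0 < a -> lam <= 0 ->
  (forall x, 0 <= x <= a -> 0 < psi x) ->
  (forall x, 0 <= x <= a -> ex_derive psi x) ->
  (forall x, 0 <= x <= a -> ex_derive (Derive psi) x) ->
  (forall x, ex_derive f x) ->
  (forall x, 0 <= x <= a -> ex_derive v x) ->
  (forall x, 0 <= x <= a -> ex_derive (Derive v) x) ->
  (forall x, 0 <= x <= a -> continuous (Derive_n v 2) x) ->
  (forall x, 0 < x < a -> Derive_n v 2 x + Derive psi x / psi x * Derive v x + f (v x) = 0) ->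
  (forall x, 0 < x < a -> - (Derive_n psi 2 x) / psi x + (Derive psi x / psi x) ^ 2 >= 0) ->
  (forall x, 0 <= x <= a -> P x = Derive psi x / psi x) ->
  (forall x, 0 <= x <= a -> Q x = Derive f (v x)) ->
  sol P Q lam al y u -> (forall x, 0 <= x <= a -> 0 < y x) ->
  (forall x, 0 <= x <= a -> psi x * Derive v x ^ 2 <= M) ->
  psi a * Derive v a ^ 2 * (u a / y a) - psi a * Derive v a * Derive_n v 2 a
   - (psi 0 * Derive v 0 ^ 2 * al - psi 0 * Derive v 0 * Derive_n v 2 0) <= - lam * M * a.
Proof.
  intros Ha Hlam Hpos Hpd Hpdd Hfd Hvd Hvdd Hvc Heq Hcurv HPe HQe Hs Hy HM.
  destruct Hs as [Hy0 [Hu0 Hd]].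
  set (Phi := fun x => psi x * Derive v x ^ 2 * (u x / y x) - psi x * Derive v x * Derive (Derive v) x).
  assert (Hyd : forall x, Derive y x = u x) by (intros; apply is_derive_unique; apply Hd).
  assert (Hud : forall x, Derive u x = - P x * u x - (Q x + lam) * y x) by (intros; apply is_derive_unique; apply Hd).
  assert (Hyex : forall x, ex_derive y x) by (intros x; eexists; apply Hd).
  assert (Huex : forall x, ex_derive u x) by (intros x; eexists; apply Hd).
  set (g := fun r => - (Derive psi r / psi r) * Derive v r - f (v r)).
  assert (Hg3 : forall x, 0 < x < a -> is_derive (Derive (Derive v)) x
     (- ((Derive (Derive psi) x / psi x - (Derive psi x / psi x) ^ 2) * Derive v x)
      - (Derive psi x / psi x) * Derive (Derive v) x - Derive v x * Derive f (v x))).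
  { intros x Hx. apply (is_derive_ext_loc g).
    - set (dl := Rmin x (a - x)). assert (Hdl : 0 < dl) by (unfold dl; apply Rmin_glb_lt; lra).
      exists (mkposreal dl Hdl). intros t Ht. unfold ball in Ht; simpl in Ht; unfold AbsRing_ball, abs, minus, plus, opp in Ht; simpl in Ht.
      assert (dl <= x) by apply Rmin_l. assert (dl <= a - x) by apply Rmin_r.
      assert (0 < t < a). { apply Rabs_lt_between in Ht. lra. }
      pose proof (Heq t H1). unfold g. change (Derive_n v 2 t) with (Derive (Derive v) t) in H2. lra.
    - unfold g. pose proof (Hpos x ltac:(lra)). auto_derive.
      repeat split; auto. apply Hpdd; lra. apply Hpd; lra. lra. apply Hvdd; lra. apply Hvd; lra.
      change (Derive (fun x0 => Derive psi x0) x) with (Derive (Derive psi) x).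
      change (Derive (fun x0 => psi x0) x) with (Derive psi x).
      change (Derive (fun x0 => Derive v x0) x) with (Derive (Derive v) x).
      change (Derive (fun x0 => v x0) x) with (Derive v x).
      change (Derive (fun x0 => f x0) (v x)) with (Derive f (v x)).
      field. lra. }
  assert (HPhi : forall x, 0 < x < a -> is_derive Phi x
     (- lam * psi x * Derive v x ^ 2 + psi x * (Derive (Derive psi) x / psi x - (Derive psi x / psi x) ^ 2) * Derive v x ^ 2
      - psi x * (Derive (Derive v) x - Derive v x * u x / y x) ^ 2)).
  { intros x Hx. pose proof (Hpos x ltac:(lra)). pose proof (Hy x ltac:(lra)).
    assert (HW1 : Derive (Derive v) x = - (Derive psi x / psi x) * Derive v x - f (v x)).
    { pose proof (Heq x Hx). change (Derive_n v 2 x) with (Derive (Derive v) x) in H1. lra. }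
    assert (HW2 := is_derive_unique _ _ _ (Hg3 x Hx)).
    unfold Phi. auto_derive.
    repeat split; auto. apply Hpd; lra. apply Hvdd; lra. lra. apply Hpd; lra. apply Hvdd; lra. eexists; apply (Hg3 x Hx).
    change (Derive (fun x0 => psi x0) x) with (Derive psi x).
    change (Derive (fun x0 => Derive v x0) x) with (Derive (Derive v) x).
    change (Derive (fun x0 => Derive (Derive v) x0) x) with (Derive (Derive (Derive v)) x).
    change (Derive (fun x0 => u x0) x) with (Derive u x).
    change (Derive (fun x0 => y x0) x) with (Derive y x).
    rewrite HW2, Hud, Hyd, HPe, HQe by lra. rewrite HW1. field. lra. }
  assert (Hcont : forall x, 0 <= x <= a -> continuous Phi x).
  { intros x Hx. unfold Phi. pose proof (Hy x Hx).
    assert (Hcp : continuous psi x) by (apply exdc; auto).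
    assert (Hcw : continuous (Derive v) x) by (apply exdc; auto).
    assert (Hcu : continuous u x) by (apply exdc; auto).
    assert (Hcy : continuous y x) by (apply exdc; auto).
    apply csub. apply cmul. apply cmul; auto. apply (cmul (Derive v) (fun s => Derive v s ^ 1)); auto.
    apply (cmul (Derive v) (fun _ => 1)); auto. apply cconst.
    apply pt_cont. apply continuity_pt_div; try apply cont_pt; auto. lra.
    apply cmul. apply cmul; auto. apply (Hvc x Hx). }
  assert (Hb := diff_le_open Phi _ 0 a (- lam * M) ltac:(lra) HPhi).
  assert (Phi a - Phi 0 <= - lam * M * (a - 0)).
  { apply Hb; auto. intros x Hx. pose proof (HM x ltac:(lra)). pose proof (Hcurv x Hx).
    pose proof (Hpos x ltac:(lra)). change (Derive_n psi 2 x) with (Derive (Derive psi) x) in H0.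
    assert (Derive (Derive psi) x / psi x - (Derive psi x / psi x) ^ 2 <= 0).
    { unfold Rdiv in *. rewrite <- Ropp_mult_distr_l in H0. lra. }
    pose proof (pow2_ge_0 (Derive v x)).
    assert (psi x * (Derive (Derive psi) x / psi x - (Derive psi x / psi x) ^ 2) * Derive v x ^ 2 <= 0).
    { assert (psi x * (Derive (Derive psi) x / psi x - (Derive psi x / psi x) ^ 2) <= 0) by nra. nra. }
    pose proof (pow2_ge_0 (Derive (Derive v) x - Derive v x * u x / y x)).
    assert (0 <= psi x * (Derive (Derive v) x - Derive v x * u x / y x) ^ 2) by nra.
    nra. }
  unfold Phi in H. rewrite Hy0, Hu0, Rdiv_1_r in H.
  change (Derive_n v 2 a) with (Derive (Derive v) a). change (Derive_n v 2 0) with (Derive (Derive v) 0). lra.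
Qed.


Lemma cfst (h : R -> R) r th : continuous h r -> continuous (fun p : R * R => h (fst p)) (r, th).
Proof. intros H. apply (continuous_comp (fun p : R * R => fst p) h). apply continuous_fst. exact H. Qed.

Lemma cont_eq (F1 F2 : R -> R) x0 : continuous F1 x0 -> continuous F2 x0 ->
  (forall d, 0 < d -> exists t, Rabs (t - x0) < d /\ F1 t = F2 t) -> F1 x0 = F2 x0.
Proof.
  intros H1 H2 H. assert (F1 x0 - F2 x0 = 0); [|lra]. apply abs_le_eps. intros eps He.
  destruct (cont_eps F1 x0 (eps/2) H1) as [d1 [Hd1 Hx1]]. lra.
  destruct (cont_eps F2 x0 (eps/2) H2) as [d2 [Hd2 Hx2]]. lra.
  destruct (H (Rmin d1 d2)) as [t [Ht Heq]]. apply Rmin_glb_lt; auto.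
  specialize (Hx1 t ltac:(eapply Rlt_le_trans; [exact Ht|apply Rmin_l])).
  specialize (Hx2 t ltac:(eapply Rlt_le_trans; [exact Ht|apply Rmin_r])).
  rewrite Heq in Hx1. replace (F1 x0 - F2 x0) with (- (F2 t - F1 x0) + (F2 t - F2 x0)) by ring.
  eapply Rle_lt_trans. apply Rabs_triang. rewrite Rabs_Ropp. lra.
Qed.

Lemma eigen_from_ode (psi : R -> R) a alpha (qf P Q : R -> R) lam y u : 0 <= a ->
  (forall r, 0 < r < a -> P r = Derive psi r / psi r) -> (forall r, 0 < r < a -> Q r = qf r) ->
  (forall x, continuous P x) -> (forall x, continuous Q x) ->
  sol P Q lam alpha y u -> u a + alpha * y a = 0 -> is_eigenvalue psi a alpha qf lam.
Proof.
  intros Ha HP HQ HPc HQc [Hy0 [Hu0 Hd]] HB.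
  set (ud := fun r => - P r * u r - (Q r + lam) * y r).
  set (phi := fun (r th : R) => y r).
  assert (Hyc : forall x, continuous y x) by (intros x; apply (isd_cont _ _ _ (proj1 (Hd x)))).
  assert (Huc : forall x, continuous u x) by (intros x; apply (isd_cont _ _ _ (proj2 (Hd x)))).
  assert (Hudc : forall x, continuous ud x).
  { intros x. unfold ud. apply csub; apply cmul; auto. apply copp; auto. apply cadd; auto. apply cconst. }
  assert (E1 : d_r phi = fun r _ => u r).
  { apply functional_extensionality; intros r. apply functional_extensionality; intros th.
    unfold d_r, phi. apply is_derive_unique. apply Hd. }
  assert (E2 : d_th phi = fun _ _ => 0).
  { apply functional_extensionality; intros r. apply functional_extensionality; intros th.
    unfold d_th, phi. apply Derive_const. }
  assert (E3 : d_r (d_r phi) = fun r _ => ud r).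
  { rewrite E1. apply functional_extensionality; intros r. apply functional_extensionality; intros th.
    unfold d_r. apply is_derive_unique. apply Hd. }
  assert (E4 : d_th (d_r phi) = fun _ _ => 0).
  { rewrite E1. apply functional_extensionality; intros r. apply functional_extensionality; intros th.
    unfold d_th. apply Derive_const. }
  assert (E5 : d_r (d_th phi) = fun _ _ => 0).
  { rewrite E2. apply functional_extensionality; intros r. apply functional_extensionality; intros th.
    unfold d_r. apply Derive_const. }
  assert (E6 : d_th (d_th phi) = fun _ _ => 0).
  { rewrite E2. apply functional_extensionality; intros r. apply functional_extensionality; intros th.
    unfold d_th. apply Derive_const. }
  exists phi. split; [|split; [|split; [|split; [|split]]]].
  - split.
    + intros r th. rewrite E1, E2. unfold phi. repeat split.
      eexists; apply Hd. apply ex_derive_const. eexists; apply Hd. apply ex_derive_const.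
      apply ex_derive_const. apply ex_derive_const.
    + intros r th _. rewrite E3, E4, E5, E6, E1, E2. unfold phi. repeat split.
      apply cfst; auto. apply cfst; auto. apply continuous_const. apply cfst; auto.
      apply continuous_const. apply continuous_const. apply continuous_const.
  - intros r th. reflexivity.
  - exists 0, 0. split. lra. unfold phi. rewrite Hy0. lra.
  - intros r th Hr. unfold LB. rewrite E3, E6, E1. unfold phi, ud. rewrite HP, HQ by auto. ring.
  - intros th. rewrite E1. unfold phi. rewrite Hy0, Hu0. ring.
  - intros th. rewrite E1. unfold phi. lra.
Qed.

Theorem theorem5p2
  (psi chi f v : R -> R) (r1 r2 a alpha : R)
  (* r1 <= 0 < a <= r2 *)
  (Hr1 : r1 <= 0) (Ha : 0 < a) (Har2 : a <= r2)
  (* psi in C^2, psi > 0 on [r1,r2] *)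
  (Hpsi_d : forall r, r1 <= r <= r2 -> ex_derive psi r)
  (Hpsi_dd : forall r, r1 <= r <= r2 -> ex_derive (Derive psi) r)
  (Hpsi_c2 : forall r, r1 <= r <= r2 -> continuous (Derive_n psi 2) r)
  (Hpsi_pos : forall r, r1 <= r <= r2 -> 0 < psi r)
  (* chi differentiable, unit-speed (regular) curve *)
  (Hchi_d : forall r, r1 <= r <= r2 -> ex_derive chi r)
  (Hchi_c1 : forall r, r1 <= r <= r2 -> continuous (Derive chi) r)
  (Hunit : forall r, r1 <= r <= r2 -> (Derive psi r) ^ 2 + (Derive chi r) ^ 2 = 1)
  (* simple curve *)
  (Hsimple : forall s t, r1 <= s <= r2 -> r1 <= t <= r2 ->
       psi s = psi t -> chi s = chi t -> s = t)
  (Hchi0 : 0 < Derive chi 0) (Hchia : 0 < Derive chi a)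
  (* f in C^1(R) *)
  (Hf_d : forall x, ex_derive f x)
  (Hf_c1 : forall x, continuous (Derive f) x)
  (* v = v(r) radial stationary solution, C^2 on [0,a] *)
  (Hv_d : forall r, 0 <= r <= a -> ex_derive v r)
  (Hv_dd : forall r, 0 <= r <= a -> ex_derive (Derive v) r)
  (Hv_c2 : forall r, 0 <= r <= a -> continuous (Derive_n v 2) r)
  (Hv_eq : forall r, 0 < r < a ->
       Derive_n v 2 r + Derive psi r / psi r * Derive v r + f (v r) = 0)
  (Hv_bc0 : - Derive v 0 + alpha * v 0 = 0)
  (Hv_bca : Derive v a + alpha * v a = 0)
  (* -(psi'/psi)' >= 0 in (0,a) *)
  (Hcurv : forall r, 0 < r < a ->
       - (Derive_n psi 2 r) / psi r + (Derive psi r / psi r) ^ 2 >= 0)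
  (Hineq :
     let L0 := 2 * PI * psi 0 in
     let La := 2 * PI * psi a in
     let Ha' := - (Derive psi a / psi a) in
     let H0 := Derive psi 0 / psi 0 in
     La * (Ha' * alpha ^ 2 * v a ^ 2 + alpha * v a * f (v a) + alpha ^ 3 * v a ^ 2)
     + L0 * (H0 * alpha ^ 2 * v 0 ^ 2 + alpha * v 0 * f (v 0) + alpha ^ 3 * v 0 ^ 2)
     < 0) :
  unstable psi a alpha f v.


Proof.
  intros.
  assert (Hin : forall x, 0 <= x <= a -> r1 <= x <= r2) by (intros; lra).
  set (p := fun r => Derive psi r / psi r).
  set (q := fun r => Derive f (v r)).
  assert (Hpc : forall x, 0 <= x <= a -> continuous p x).
  { intros x Hx. unfold p. apply pt_cont. apply continuity_pt_div.
    apply cont_pt, exdc, Hpsi_dd, Hin; auto. apply cont_pt, exdc, Hpsi_d, Hin; auto.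
    pose proof (Hpsi_pos x (Hin x Hx)). lra. }
  assert (Hqc : forall x, 0 <= x <= a -> continuous q x).
  { intros x Hx. unfold q. apply (ccomp v (Derive f)). apply exdc, Hv_d; auto. apply Hf_c1. }
  set (cl := fun r => (Rabs r - Rabs (r - a) + a) * / 2).
  assert (Hcl1 : forall r, 0 <= cl r <= a).
  { intros r. unfold cl. unfold Rabs. destruct (Rcase_abs r); destruct (Rcase_abs (r - a)); lra. }
  assert (Hcl2 : forall r, 0 <= r <= a -> cl r = r).
  { intros r Hr. unfold cl. unfold Rabs. destruct (Rcase_abs r); destruct (Rcase_abs (r - a)); lra. }
  assert (Hclc : forall x, continuous cl x).
  { intros x. unfold cl. apply (cmul (fun r => Rabs r - Rabs (r - a) + a) (fun _ => / 2)).
    apply cadd. apply csub. apply cont_abs. apply (continuous_id (U:=R_UniformSpace)).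
    apply cont_abs. apply csub. apply (continuous_id (U:=R_UniformSpace)). apply cconst. apply cconst. apply cconst. }
  set (P := fun r => p (cl r)). set (Q := fun r => q (cl r)).
  assert (HPc : forall x, continuous P x).
  { intros x. unfold P. apply (ccomp cl p). auto. apply Hpc. auto. }
  assert (HQc : forall x, continuous Q x).
  { intros x. unfold Q. apply (ccomp cl q). auto. apply Hqc. auto. }
  destruct (continuity_ab_maj (fun r => Rabs (p r) + Rabs (q r)) 0 a ltac:(lra)) as [Mx [HMx HMx2]].
  { intros c Hc. apply cont_pt. apply cadd; apply cont_abs; auto. }
  set (K := Rabs (p Mx) + Rabs (q Mx)).
  assert (HK : 0 <= K). { unfold K. pose proof (Rabs_pos (p Mx)). pose proof (Rabs_pos (q Mx)). lra. }
  assert (HPb : forall x, Rabs (P x) <= K).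
  { intros x. unfold P. pose proof (HMx (cl x) (Hcl1 x)). pose proof (Rabs_pos (q (cl x))). unfold K. lra. }
  assert (HQb : forall x, Rabs (Q x) <= K).
  { intros x. unfold Q. pose proof (HMx (cl x) (Hcl1 x)). pose proof (Rabs_pos (p (cl x))). unfold K. lra. }
  assert (HYU : forall lam, {yu : (R -> R) * (R -> R) | sol P Q lam alpha (fst yu) (snd yu)}).
  { intros lam. apply constructive_indefinite_description.
    assert (HQl : forall x, continuous (fun r => Q r + lam) x) by (intros; apply cadd; auto; apply cconst).
    destruct (ode_exists P (fun r => Q r + lam) 1 alpha (K + Rabs lam) HPc HQl) as [y [u [H1 [H2 H3]]]].
    pose proof (Rabs_pos lam). lra.
    intros x. pose proof (HPb x). pose proof (Rabs_pos lam). lra.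
    intros x. pose proof (HQb x). pose proof (Rabs_triang (Q x) lam). lra.
    exists (y, u). simpl. split; auto. }
  set (Y := fun lam => fst (proj1_sig (HYU lam))). set (U := fun lam => snd (proj1_sig (HYU lam))).
  assert (HYU' : forall lam, sol P Q lam alpha (Y lam) (U lam)) by (intros lam; unfold Y, U; apply (proj2_sig (HYU lam))).
  destruct (continuity_ab_maj (fun r => psi r * Derive v r ^ 2) 0 a ltac:(lra)) as [Mx2 [HM HM2]].
  { intros c Hc. apply cont_pt. apply cmul. apply exdc, Hpsi_d, Hin; auto.
    apply (cmul (Derive v) (fun s => Derive v s ^ 1)). apply exdc, Hv_dd; auto.
    apply (cmul (Derive v) (fun _ => 1)). apply exdc, Hv_dd; auto. apply cconst. }
  set (M := psi Mx2 * Derive v Mx2 ^ 2).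
  assert (HM0 : 0 <= M). { unfold M. pose proof (Hpsi_pos Mx2 (Hin Mx2 HM2)). pose proof (pow2_ge_0 (Derive v Mx2)). nra. }
  assert (HF2c : forall x, 0 <= x <= a -> continuous (fun r => - p r * Derive v r - f (v r)) x).
  { intros x Hx. apply csub. apply cmul. apply copp. auto. apply exdc, Hv_dd; auto.
    apply (ccomp v f). apply exdc, Hv_d; auto. apply exdc, Hf_d. }
  assert (HW1a : Derive_n v 2 a = - p a * Derive v a - f (v a)).
  { apply (cont_eq (Derive_n v 2) (fun r => - p r * Derive v r - f (v r)) a). apply Hv_c2; lra. apply HF2c; lra.
    intros d Hd. exists (a - Rmin d a / 2). assert (0 < Rmin d a) by (apply Rmin_glb_lt; lra).
    assert (Rmin d a <= d) by apply Rmin_l. assert (Rmin d a <= a) by apply Rmin_r.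
    split. rewrite Rabs_left; lra. pose proof (Hv_eq (a - Rmin d a / 2) ltac:(lra)). unfold p. lra. }
  assert (HW10 : Derive_n v 2 0 = - p 0 * Derive v 0 - f (v 0)).
  { apply (cont_eq (Derive_n v 2) (fun r => - p r * Derive v r - f (v r)) 0). apply Hv_c2; lra. apply HF2c; lra.
    intros d Hd. exists (Rmin d a / 2). assert (0 < Rmin d a) by (apply Rmin_glb_lt; lra).
    assert (Rmin d a <= d) by apply Rmin_l. assert (Rmin d a <= a) by apply Rmin_r.
    split. rewrite Rminus_0_r, Rabs_pos_eq; lra. pose proof (Hv_eq (Rmin d a / 2) ltac:(lra)). unfold p. lra. }
  set (Eh := psi a * Derive v a * Derive_n v 2 a - psi 0 * Derive v 0 * Derive_n v 2 0
             + alpha * (psi a * Derive v a ^ 2 + psi 0 * Derive v 0 ^ 2)).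
  assert (Hpa : 0 < psi a) by (apply Hpsi_pos; lra). assert (Hp0 : 0 < psi 0) by (apply Hpsi_pos; lra).
  assert (HEh : Eh < 0).
  { cbv zeta in Hineq.
    assert (2 * PI * Eh = 2 * PI * psi a * (- (Derive psi a / psi a) * alpha ^ 2 * v a ^ 2 + alpha * v a * f (v a) + alpha ^ 3 * v a ^ 2) +
       2 * PI * psi 0 * (Derive psi 0 / psi 0 * alpha ^ 2 * v 0 ^ 2 + alpha * v 0 * f (v 0) + alpha ^ 3 * v 0 ^ 2)).
    { unfold Eh. rewrite HW1a, HW10. unfold p.
      replace (Derive v a) with (- alpha * v a) by lra. replace (Derive v 0) with (alpha * v 0) by lra.
      field. lra. }
    pose proof PI_RGT_0. nra. }
  set (lam0 := Eh / (2 * (M + 1) * a)).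
  assert (Hl0 : lam0 < 0). { unfold lam0. unfold Rdiv. assert (0 < / (2 * (M + 1) * a)) by (apply Rinv_0_lt_compat; nra). nra. }
  assert (Hpic : (forall r, 0 <= r <= a -> 0 < Y lam0 r) -> U lam0 a + alpha * Y lam0 a < 0).
  { intros Hpos.
    assert (Hpc2 := picone psi f v P Q (Y lam0) (U lam0) a alpha lam0 M Ha ltac:(lra)).
    assert (H := Hpc2 ltac:(intros; apply Hpsi_pos; lra) ltac:(intros; apply Hpsi_d; lra)
      ltac:(intros; apply Hpsi_dd; lra) Hf_d Hv_d Hv_dd Hv_c2 Hv_eq Hcurv).
    clear Hpc2.
    assert (H' : psi a * Derive v a ^ 2 * (U lam0 a / Y lam0 a) - psi a * Derive v a * Derive_n v 2 a -
      (psi 0 * Derive v 0 ^ 2 * alpha - psi 0 * Derive v 0 * Derive_n v 2 0) <= - lam0 * M * a).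
    { apply H; auto.
      intros x Hx. unfold P. rewrite Hcl2; auto.
      intros x Hx. unfold Q. rewrite Hcl2; auto. }
    clear H.
    assert (Hbd : - lam0 * M * a <= - Eh / 2).
    { unfold lam0. replace (- (Eh / (2 * (M + 1) * a)) * M * a) with ((- Eh / 2) * (M / (M + 1))) by (field; lra).
      assert (M / (M + 1) <= 1). { apply (Rmult_le_reg_r (M + 1)). lra. unfold Rdiv. rewrite Rmult_assoc, Rinv_l by lra. lra. }
      assert (0 <= M / (M + 1)) by (apply Rdiv_le_0_compat; lra). nra. }
    assert (Hya : 0 < Y lam0 a) by (apply Hpos; lra).
    set (t := U lam0 a / Y lam0 a + alpha).
    assert (psi a * Derive v a ^ 2 * t < 0). { unfold t, Eh in *. nra. }
    assert (0 <= psi a * Derive v a ^ 2) by (pose proof (pow2_ge_0 (Derive v a)); nra).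
    assert (t < 0) by (destruct (Rle_or_lt 0 t); nra).
    replace (U lam0 a + alpha * Y lam0 a) with (Y lam0 a * t) by (unfold t; field; lra). nra. }
  destruct (eig_exists P Q K alpha a HK HPb HQb Ha Y U HYU' lam0 Hl0 Hpic) as [lam [Hlam HB]].
  assert (Heig : is_eigenvalue psi a alpha (fun r => Derive f (v r)) lam).
  { apply (eigen_from_ode psi a alpha _ P Q lam (Y lam) (U lam)); auto. lra.
    intros r Hr. unfold P. rewrite Hcl2 by lra. reflexivity.
    intros r Hr. unfold Q. rewrite Hcl2 by lra. reflexivity. }
  unfold unstable, lambda1.
  apply Rbar_le_lt_trans with (Finite lam).
  destruct (Glb_Rbar_correct (is_eigenvalue psi a alpha (fun r => Derive f (v r)))) as [Hlb _].
  apply Hlb. exact Heig.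
  simpl. exact Hlam.
Qed.
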